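(* In $\mathrm U_q(\mathfrak{gl}_3)[[\zeta]]$ one has $$1-C^{(1)}\zeta-C^{(2)}\zeta^2-C^{(3)}\zeta^3=N'_{11}(q^2\zeta)\,N''_{22}(\zeta)\,N'''_{33}(q^{-2}\zeta).$$
   Context: Setting: $\hbar\in\mathbb C$, $q=e^\hbar$, $q^2\neq1$, $\kappa_q=q-q^{-1}$, $[\nu]_q=(q^\nu-q^{-\nu})/\kappa_q$. Let $\mathfrak g=\mathbb CG_1\oplus\mathbb CG_2\oplus\mathbb CG_3$ and define linear forms $\alpha_1,\alpha_2$ on $\mathfrak g$ by $\alpha_1(G_1)=1,\alpha_1(G_2)=-1,\alpha_1(G_3)=0$, $\alpha_2(G_1)=0,\alpha_2(G_2)=1,\alpha_2(G_3)=-1$; put $H_1=G_1-G_2$, $H_2=G_2-G_3$. $\mathrm U_q(\mathfrak{gl}_3)$ is the unital associative $\mathbb C$-algebra generated by $E_1,E_2,F_1,F_2$ and symbols $q^X$, $X\in\mathfrak g$, with relations $q^0=1$, $q^{X_1}q^{X_2}=q^{X_1+X_2}$, $q^XE_iq^{-X}=q^{\alpha_i(X)}E_i$, $q^XF_iq^{-X}=q^{-\alpha_i(X)}F_i$, $[E_i,F_j]=\delta_{ij}(q^{H_i}-q^{-H_i})/\kappa_q$, and for $i\ne j$ the $q$-Serre relations $E_i^2E_j-[2]_qE_iE_jE_i+E_jE_i^2=0$, $F_i^2F_j-[2]_qF_iF_jF_i+F_jF_i^2=0$. For $\nu\in\mathbb C$ one writes $q^{X+\nu}=q^\nu q^X$.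 Further $E_3=E_1E_2-q^{-1}E_2E_1$, $F_3=F_2F_1-qF_1F_2$. Central elements: $C^{(1)}=q^{-2G_1-2}+q^{-2G_2}+q^{-2G_3+2}+\kappa_q^2F_1E_1q^{-G_1-G_2-1}+\kappa_q^2F_2E_2q^{-G_2-G_3+1}+\kappa_q^2F_3E_3q^{-G_1-G_3+1}-\kappa_q^3F_3E_1E_2q^{-G_1-G_3}$, $C^{(2)}=-q^{-2G_1-2G_2-2}-q^{-2G_1-2G_3}-q^{-2G_2-2G_3+2}-\kappa_q^2F_1E_1q^{-G_1-G_2-2G_3+1}-\kappa_q^2F_2E_2q^{-2G_1-G_2-G_3-1}-\kappa_q^2F_3E_3q^{-G_1-2G_2-G_3+1}-\kappa_q^3F_1F_2E_3q^{-G_1-2G_2-G_3+1}$, $C^{(3)}=q^{-2(G_1+G_2+G_3)}$. Matrix entries: in $\mathrm U_q(\mathfrak{gl}_3)[[\zeta]]$ ($\zeta$ a formal variable; series with constant term $1$ are invertible) let $N'_{11}(\zeta)=1-\zeta q^{-2G_1}$, $N'_{22}(\zeta)=1-\zeta q^{-2G_2}$, $N'_{33}(\zeta)=1-\zeta q^{-2G_3}$, $N'_{12}=\kappa_q qF_1q^{-G_1-G_2}$, $N'_{23}=\kappa_q qF_2q^{-G_2-G_3}$, $N'_{13}=\kappa_q qF_3q^{-G_1-G_3}$, $N'_{21}=\kappa_qE_1$, $N'_{32}=\kappa_qE_2$, $N'_{31}=\kappa_qE_3$; and $N''_{22}(\zeta)=N'_{22}(\zeta)-\zeta N'_{21}N'_{11}(\zeta)^{-1}N'_{12}$,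 $N''_{23}(\zeta)=N'_{23}-N'_{21}N'_{11}(\zeta)^{-1}N'_{13}$, $N''_{32}(\zeta)=N'_{32}-\zeta N'_{31}N'_{11}(\zeta)^{-1}N'_{12}$, $N''_{33}(\zeta)=N'_{33}(\zeta)-\zeta N'_{31}N'_{11}(\zeta)^{-1}N'_{13}$, $N'''_{33}(\zeta)=N''_{33}(\zeta)-\zeta N''_{32}(\zeta)N''_{22}(\zeta)^{-1}N''_{23}(\zeta)$. For $c\in\mathbb C$, $N(c\zeta)$ denotes substitution $\zeta\mapsto c\zeta$. *)

(* Defs.v *)
From HB Require Import structures.
From mathcomp Require Import all_boot all_order all_algebra.
Set Implicit Arguments. Unset Strict Implicit. Unset Printing Implicit Defensive.
Import Order.TTheory GRing.Theory Num.Theory.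
Local Open Scope ring_scope.

Definition series (A : Type) := nat -> A.

Section Series.
Variable (K : fieldType) (A : algType K).

Definition pC (a : A) : series A := fun n => if n is 0%N then a else 0.
Definition pX (a : A) : series A := fun n => if n is 1%N then a else 0.
Definition pzeta : series A := pX 1.
Definition padd (f g : series A) : series A := fun n => f n + g n.
Definition psub (f g : series A) : series A := fun n => f n - g n.
Definition pmul (f g : series A) : series A :=
  fun n => \sum_(i < n.+1) f i * g (n - i)%N.
Definition ppow (f : series A) (k : nat) : series A := iter k (pmul f) (pC 1).
(* inverse of a series with constant term 1 (Neumann series):
   f^{-1} = sum_k (1 - f)^k, well defined since 1 - f has no constant term *)
Definition pinv (f : series A) : series A :=
  fun n => \sum_(k < n.+1) ppow (psub (pC 1) f) k n.
Definition psubst (c : K) (f : series A) : series A := fun n => c ^+ n *: f n.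
End Series.
Arguments pzeta {K A}.

(* Tq x1 x2 x3 stands for the symbol q^X with X = x1 G1 + x2 G2 + x3 G3.
   qp nu stands for the scalar q^nu = e^(hbar nu). *)
Record UqGens (K : fieldType) (A : algType K) := {
  E1 : A; E2 : A; F1 : A; F2 : A; Tq : K -> K -> K -> A }.

Section Uq.
Variables (K : fieldType) (qp : K -> K) (A : algType K) (g : UqGens A).

Definition qq : K := qp 1.
Definition kappa : K := qp 1 - qp (-1).
Definition qint2 : K := (qp 2 - qp (-2)) / kappa.

Local Notation E1 := (E1 g). Local Notation E2 := (E2 g).
Local Notation F1 := (F1 g). Local Notation F2 := (F2 g).
Local Notation T := (Tq g).

Definition Uq_relations : Prop :=
  [/\ T 0 0 0 = 1,
      (forall a b c a' b' c',
          T a b c * T a' b' c' = T (a + a') (b + b') (c + c')),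
    [/\ (forall a b c, T a b c * E1 * T (- a) (- b) (- c) = qp (a - b) *: E1),
      (forall a b c, T a b c * E2 * T (- a) (- b) (- c) = qp (b - c) *: E2),
      (forall a b c, T a b c * F1 * T (- a) (- b) (- c) = qp (- (a - b)) *: F1) &
      (forall a b c, T a b c * F2 * T (- a) (- b) (- c) = qp (- (b - c)) *: F2)],
      [/\ E1 * F1 - F1 * E1 = kappa^-1 *: (T 1 (-1) 0 - T (-1) 1 0),
          E2 * F2 - F2 * E2 = kappa^-1 *: (T 0 1 (-1) - T 0 (-1) 1),
          E1 * F2 - F2 * E1 = 0 &
          E2 * F1 - F1 * E2 = 0] &
      [/\ E1 * E1 * E2 - qint2 *: (E1 * E2 * E1) + E2 * E1 * E1 = 0,
          E2 * E2 * E1 - qint2 *: (E2 * E1 * E2) + E1 * E2 * E2 = 0,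
          F1 * F1 * F2 - qint2 *: (F1 * F2 * F1) + F2 * F1 * F1 = 0 &
          F2 * F2 * F1 - qint2 *: (F2 * F1 * F2) + F1 * F2 * F2 = 0]].

Definition E3 : A := E1 * E2 - qp (-1) *: (E2 * E1).
Definition F3 : A := F2 * F1 - qp 1 *: (F1 * F2).

Definition C1 : A :=
  qp (-2) *: T (-2) 0 0 + T 0 (-2) 0 + qp 2 *: T 0 0 (-2)
  + (kappa ^+ 2 * qp (-1)) *: (F1 * E1 * T (-1) (-1) 0)
  + (kappa ^+ 2 * qp 1) *: (F2 * E2 * T 0 (-1) (-1))
  + (kappa ^+ 2 * qp 1) *: (F3 * E3 * T (-1) 0 (-1))
  - kappa ^+ 3 *: (F3 * E1 * E2 * T (-1) 0 (-1)).

Definition C2 : A :=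
  - (qp (-2) *: T (-2) (-2) 0) - T (-2) 0 (-2) - qp 2 *: T 0 (-2) (-2)
  - (kappa ^+ 2 * qp 1) *: (F1 * E1 * T (-1) (-1) (-2))
  - (kappa ^+ 2 * qp (-1)) *: (F2 * E2 * T (-2) (-1) (-1))
  - (kappa ^+ 2 * qp 1) *: (F3 * E3 * T (-1) (-2) (-1))
  - (kappa ^+ 3 * qp 1) *: (F1 * F2 * E3 * T (-1) (-2) (-1)).

Definition C3 : A := T (-2) (-2) (-2).

Definition N'11 : series A := psub (pC 1) (pX (T (-2) 0 0)).
Definition N'22 : series A := psub (pC 1) (pX (T 0 (-2) 0)).
Definition N'33 : series A := psub (pC 1) (pX (T 0 0 (-2))).
Definition N'12 : series A := pC ((kappa * qp 1) *: (F1 * T (-1) (-1) 0)).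
Definition N'23 : series A := pC ((kappa * qp 1) *: (F2 * T 0 (-1) (-1))).
Definition N'13 : series A := pC ((kappa * qp 1) *: (F3 * T (-1) 0 (-1))).
Definition N'21 : series A := pC (kappa *: E1).
Definition N'32 : series A := pC (kappa *: E2).
Definition N'31 : series A := pC (kappa *: E3).

Definition N''22 : series A :=
  psub N'22 (pmul pzeta (pmul N'21 (pmul (pinv N'11) N'12))).
Definition N''23 : series A :=
  psub N'23 (pmul N'21 (pmul (pinv N'11) N'13)).
Definition N''32 : series A :=
  psub N'32 (pmul pzeta (pmul N'31 (pmul (pinv N'11) N'12))).
Definition N''33 : series A :=
  psub N'33 (pmul pzeta (pmul N'31 (pmul (pinv N'11) N'13))).
Definition N'''33 : series A :=
  psub N''33 (pmul pzeta (pmul N''32 (pmul (pinv N''22) N''23))).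

Definition charpoly : series A :=
  fun n => match n with
           | 0 => 1 | 1 => - C1 | 2 => - C2 | 3 => - C3 | _ => 0 end.
End Uq.

(* Main.v *)
From Stdlib Require Import PeanoNat FunctionalExtensionality.
Require Import Defs.
From HB Require Import structures.
From mathcomp Require Import all_boot all_order all_algebra.
From mathcomp Require Import zify.
Import GRing.Theory.
Local Open Scope ring_scope.
Set Implicit Arguments. Unset Strict Implicit.

Inductive letter := LE1 | LE2 | LE3 | LF1 | LF2 | LF3 | LT of int & int & int.

Definition int_eqb (a b : int) : bool :=
  match a, b with
  | Posz m, Posz n => Nat.eqb m n
  | Negz m, Negz n => Nat.eqb m n
  | _, _ => false end.

Lemma int_eqbP a b : reflect (a = b) (int_eqb a b).
Proof.
case: a; case: b => m n /=; try by constructor.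
- by apply: (iffP (Nat.eqb_spec _ _)) => [->|[]].
- by apply: (iffP (Nat.eqb_spec _ _)) => [->|[]].
Qed.

Definition letter_eqb (x y : letter) : bool :=
  match x, y with
  | LE1, LE1 | LE2, LE2 | LE3, LE3 | LF1, LF1 | LF2, LF2 | LF3, LF3 => true
  | LT a b c, LT a' b' c' => int_eqb a a' && int_eqb b b' && int_eqb c c'
  | _, _ => false end.

Lemma letter_eqbP x y : reflect (x = y) (letter_eqb x y).
Proof.
case: x; case: y => /=; try by constructor.
move=> a b c a' b' c'.
case: (int_eqbP a' a) => [->|h]; last by constructor => -[].
case: (int_eqbP b' b) => [->|h]; last by constructor => -[].
case: (int_eqbP c' c) => [->|h]; last by constructor => -[].
by constructor.
Qed.

Fixpoint word_eqb (u v : seq letter) : bool :=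
  match u, v with
  | [::], [::] => true
  | x :: u', y :: v' => letter_eqb x y && word_eqb u' v'
  | _, _ => false end.

Lemma word_eqbP u v : reflect (u = v) (word_eqb u v).
Proof.
elim: u v => [|x u IH] [|y v] /=; try by constructor.
case: (letter_eqbP x y) => [->|h]; last by constructor => -[].
by case: (IH v) => [->|h]; constructor => // -[].
Qed.

(* Laurent polynomials in q with integer coefficients: (exponent, coefficient) *)
Definition laur := seq (int * int).
Definition lmul (l1 l2 : laur) : laur :=
  flatten (map (fun p => map (fun p' => (p.1 + p'.1, p.2 * p'.2)%R) l2) l1).
Arguments lmul : simpl never.
Definition lopp (l : laur) : laur := map (fun p => (p.1, - p.2)%R) l.
Fixpoint lins (p : int * int) (l : laur) : laur :=
  match l with
  | [::] => [:: p]
  | p' :: l' => if int_eqb p.1 p'.1 then (p.1, p.2 + p'.2)%R :: l' else p' :: lins p l'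
  end.
Definition lnorm (l : laur) : laur := foldr lins [::] l.
Definition lzero (l : laur) : bool := all (fun p => int_eqb p.2 0) (lnorm l).
Definition lone : laur := [:: (0%R, 1%R)].
Fixpoint lexp (l : laur) (n : nat) : laur :=
  match n with 0 => lone | n'.+1 => lmul l (lexp l n') end.

Inductive sexpr :=
  SQ of int | SK | SOne | SZero | SNat of nat | SAdd of sexpr & sexpr
| SMul of sexpr & sexpr | SOpp of sexpr | SExp of sexpr & nat.

Fixpoint slaur (s : sexpr) : laur :=
  match s with
  | SQ n => [:: (n, 1%R)]
  | SK => [:: (1%R, 1%R); ((-1)%R, (-1)%R)]
  | SOne => lone
  | SZero => [::]
  | SNat n => [:: (0%R, n%:Z)]
  | SAdd s t => slaur s ++ slaur t
  | SMul s t => lmul (slaur s) (slaur t)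
  | SOpp s => lopp (slaur s)
  | SExp s n => lexp (slaur s) n
  end.

Inductive aexpr :=
  AL of letter | AOne | AZero | AAdd of aexpr & aexpr | AOpp of aexpr
| AMul of aexpr & aexpr | AScale of sexpr & aexpr.

Definition term := (seq letter * laur)%type.
Definition tmul (t1 t2 : term) : term := (t1.1 ++ t2.1, lmul t1.2 t2.2).
Definition tsmul (l : laur) (t : term) : term := (t.1, lmul l t.2).
Definition topp (t : term) : term := (t.1, lopp t.2).

Fixpoint expand (e : aexpr) : seq term :=
  match e with
  | AL x => [:: ([:: x], lone)]
  | AOne => [:: ([::], lone)]
  | AZero => [::]
  | AAdd a b => expand a ++ expand b
  | AOpp a => map topp (expand a)
  | AMul a b => let eb := expand b in flatten (map (fun t => map (tmul t) eb) (expand a))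
  | AScale s a => map (tsmul (slaur s)) (expand a)
  end.

Fixpoint tins (t : term) (l : seq term) : seq term :=
  match l with
  | [::] => [:: t]
  | t' :: l' => if word_eqb t.1 t'.1 then (t.1, t.2 ++ t'.2) :: l' else t' :: tins t l'
  end.
Definition tnorm (l : seq term) : seq term := foldr tins [::] l.
Definition tzero (l : seq term) : bool := all (fun t => lzero t.2) (tnorm l).

Section Interp.
Variables (K : fieldType) (qp : K -> K) (A : algType K) (g : UqGens A).
Hypothesis qp0 : qp 0 = 1.
Hypothesis qpD : forall a b, qp (a + b) = qp a * qp b.

Definition iletter (x : letter) : A :=
  match x with
  | LE1 => E1 g | LE2 => E2 g | LE3 => E3 qp g
  | LF1 => F1 g | LF2 => F2 g | LF3 => F3 qp g
  | LT a b c => Tq g a%:~R b%:~R c%:~R end.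
Definition iword (w : seq letter) : A := foldr (fun x acc => iletter x * acc) 1 w.
Definition ilaur (l : laur) : K := foldr (fun p acc => p.2%:~R * qp p.1%:~R + acc) 0 l.
Definition iterm (t : term) : A := ilaur t.2 *: iword t.1.
Definition iterms (l : seq term) : A := foldr (fun t acc => iterm t + acc) 0 l.

Fixpoint isexpr (s : sexpr) : K :=
  match s with
  | SQ n => qp n%:~R
  | SK => kappa qp
  | SOne => 1
  | SZero => 0
  | SNat n => n%:R
  | SAdd s t => isexpr s + isexpr t
  | SMul s t => isexpr s * isexpr t
  | SOpp s => - isexpr s
  | SExp s n => isexpr s ^+ n
  end.

Fixpoint iaexpr (e : aexpr) : A :=
  match e with
  | AL x => iletter x
  | AOne => 1
  | AZero => 0
  | AAdd a b => iaexpr a + iaexpr b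
  | AOpp a => - iaexpr a
  | AMul a b => iaexpr a * iaexpr b
  | AScale s a => isexpr s *: iaexpr a
  end.

Lemma ilaur_cat l1 l2 : ilaur (l1 ++ l2) = ilaur l1 + ilaur l2.
Proof. by elim: l1 => [|p l IH] /=; rewrite ?add0r // IH addrA. Qed.

Lemma ilaur_map_mul p l :
  ilaur (map (fun p' => (p.1 + p'.1, p.2 * p'.2)%R) l) = (p.2%:~R * qp p.1%:~R) * ilaur l.
Proof.
elim: l => [|p' l IH] /=; first by rewrite mulr0.
rewrite IH mulrDr; congr (_ + _).
rewrite intrD intrM qpD; rewrite -!mulrA; congr (_ * _).
by rewrite mulrCA.
Qed.

Lemma ilaur_mul l1 l2 : ilaur (lmul l1 l2) = ilaur l1 * ilaur l2.
Proof.
rewrite /lmul; elim: l1 => [|p l IH] /=; first by rewrite mul0r.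
by rewrite ilaur_cat IH ilaur_map_mul mulrDl.
Qed.

Lemma ilaur_opp l : ilaur (lopp l) = - ilaur l.
Proof. by elim: l => [|p l IH] /=; rewrite ?oppr0 // IH opprD intrN mulNr. Qed.

Lemma ilaur_one : ilaur lone = 1.
Proof. by rewrite /= addr0 qp0 mulr1. Qed.

Lemma ilaur_lins p l : ilaur (lins p l) = p.2%:~R * qp p.1%:~R + ilaur l.
Proof.
elim: l => [|p' l IH] //=.
case: (int_eqbP p.1 p'.1) => [e|_] /=.
  by rewrite intrD mulrDl -e addrA.
by rewrite IH addrCA.
Qed.

Lemma ilaur_norm l : ilaur (lnorm l) = ilaur l.
Proof. by elim: l => [|p l IH] //=; rewrite ilaur_lins IH. Qed.

Lemma lzero_sound l : lzero l -> ilaur l = 0.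
Proof.
rewrite /lzero -ilaur_norm; elim: (lnorm l) => [|p l' IH] //= /andP[h1 h2].
by rewrite IH // (int_eqbP _ _ h1) mul0r addr0.
Qed.

Lemma ilaur_exp l n : ilaur (lexp l n) = ilaur l ^+ n.
Proof. elim: n => [|n IH]; first exact: ilaur_one.
by rewrite [lexp _ _]/= ilaur_mul IH exprS. Qed.

Lemma slaur_sound s : ilaur (slaur s) = isexpr s.
Proof.
elim: s => [n| | | |n|s IHs t IHt|s IHs t IHt|s IHs|s IHs n] /=.
- by rewrite addr0 mul1r.
- rewrite addr0 /kappa; congr (_ + _); first by rewrite mul1r.
  by rewrite mulN1r.
- exact: ilaur_one.
- by [].
- by rewrite addr0 qp0 mulr1.
- by rewrite ilaur_cat IHs IHt.
- by rewrite ilaur_mul IHs IHt.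
- by rewrite ilaur_opp IHs.
- by rewrite ilaur_exp IHs.
Qed.

Lemma iword_cat u v : iword (u ++ v) = iword u * iword v.
Proof. by elim: u => [|x u IH] /=; rewrite ?mul1r // IH mulrA. Qed.

Lemma iterms_cat l1 l2 : iterms (l1 ++ l2) = iterms l1 + iterms l2.
Proof. by elim: l1 => [|t l IH] /=; rewrite ?add0r // IH addrA. Qed.

Lemma iterm_mul t1 t2 : iterm (tmul t1 t2) = iterm t1 * iterm t2.
Proof.
rewrite /iterm /tmul /= iword_cat ilaur_mul.
by rewrite -scalerAl -scalerAr scalerA.
Qed.

Lemma iterms_map_mul t l : iterms (map (tmul t) l) = iterm t * iterms l.
Proof. by elim: l => [|t' l IH] /=; rewrite ?mulr0 // IH iterm_mul mulrDr. Qed.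

Lemma iterms_opp l : iterms (map topp l) = - iterms l.
Proof.
elim: l => [|t l IH] /=; rewrite ?oppr0 // IH opprD; congr (_ + _).
by rewrite /iterm /topp /= ilaur_opp scaleNr.
Qed.

Lemma iterms_smul s l : iterms (map (tsmul s) l) = ilaur s *: iterms l.
Proof.
elim: l => [|t l IH] /=; rewrite ?scaler0 // IH scalerDr; congr (_ + _).
by rewrite /iterm /tsmul /= ilaur_mul scalerA.
Qed.

Lemma expand_sound e : iterms (expand e) = iaexpr e.
Proof.
elim: e => [x| | |a IHa b IHb|a IHa|a IHa b IHb|s a IHa] /=.
- by rewrite addr0 /iterm ilaur_one scale1r /= mulr1.
- by rewrite addr0 /iterm ilaur_one scale1r.
- by [].
- by rewrite iterms_cat IHa IHb.
- by rewrite iterms_opp IHa.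
- rewrite -IHa -IHb; elim: (expand a) => [|t l IH] /=; first by rewrite mul0r.
  by rewrite iterms_cat IH iterms_map_mul mulrDl.
- by rewrite iterms_smul IHa slaur_sound.
Qed.

Lemma iterms_tins t l : iterms (tins t l) = iterm t + iterms l.
Proof.
elim: l => [|t' l IH] //=.
case: (word_eqbP t.1 t'.1) => [e|_] /=.
  by rewrite /iterm /= ilaur_cat scalerDl -e addrA.
by rewrite IH addrCA.
Qed.

Lemma iterms_norm l : iterms (tnorm l) = iterms l.
Proof. by elim: l => [|t l IH] //=; rewrite iterms_tins IH. Qed.

Lemma tzero_sound l : tzero l -> iterms l = 0.
Proof.
rewrite /tzero -iterms_norm; elim: (tnorm l) => [|t l' IH] //= /andP[h1 h2].
by rewrite IH // /iterm (lzero_sound h1) scale0r addr0.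
Qed.

End Interp.

Inductive urel := RTT of int & int & int & int & int & int | RT0
  | RTL of letter & int & int & int | RN of nat.

Definition wt (l : letter) (a b c : int) : int :=
  match l with
  | LE1 => a - b | LE2 => b - c | LE3 => a - c
  | LF1 => b - a | LF2 => c - b | LF3 => c - a | LT _ _ _ => 0 end.

Notation "x .* y" := (AMul x y) (at level 40, left associativity).
Notation "x .+ y" := (AAdd x y) (at level 50, left associativity).
Notation "x .- y" := (AAdd x (AOpp y)) (at level 50, left associativity).

Definition aE1 := AL LE1. Definition aE2 := AL LE2. Definition aE3 := AL LE3.
Definition aF1 := AL LF1. Definition aF2 := AL LF2. Definition aF3 := AL LF3.
Definition aT a b c := AL (LT a b c).
Definition sQ1 := SAdd (SQ 1) (SQ (-1)).

Definition fixed_rel (n : nat) : aexpr :=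
  match n with
  | 0 => AScale SK (aE1 .* aF1 .- aF1 .* aE1) .- (aT 1 (-1) 0 .- aT (-1) 1 0)
  | 1 => AScale SK (aE2 .* aF2 .- aF2 .* aE2) .- (aT 0 1 (-1) .- aT 0 (-1) 1)
  | 2 => aE1 .* aF2 .- aF2 .* aE1
  | 3 => aE2 .* aF1 .- aF1 .* aE2
  | 4 => aE1 .* aE1 .* aE2 .- AScale sQ1 (aE1 .* aE2 .* aE1) .+ aE2 .* aE1 .* aE1
  | 5 => aE2 .* aE2 .* aE1 .- AScale sQ1 (aE2 .* aE1 .* aE2) .+ aE1 .* aE2 .* aE2
  | 6 => aF1 .* aF1 .* aF2 .- AScale sQ1 (aF1 .* aF2 .* aF1) .+ aF2 .* aF1 .* aF1
  | 7 => aF2 .* aF2 .* aF1 .- AScale sQ1 (aF2 .* aF1 .* aF2) .+ aF1 .* aF2 .* aF2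
  | 8 => aE3 .- (aE1 .* aE2 .- AScale (SQ (-1)) (aE2 .* aE1))
  | 9 => aF3 .- (aF2 .* aF1 .- AScale (SQ 1) (aF1 .* aF2))
  | 10 => aE2 .* aE1 .- AScale (SQ 1) (aE1 .* aE2) .+ AScale (SQ 1) aE3
  | 11 => aE3 .* aE1 .- AScale (SQ (-1)) (aE1 .* aE3)
  | 12 => aE2 .* aE3 .- AScale (SQ (-1)) (aE3 .* aE2)
  | 13 => aF2 .* aF1 .- AScale (SQ 1) (aF1 .* aF2) .- aF3
  | 14 => aF3 .* aF1 .- AScale (SQ (-1)) (aF1 .* aF3)
  | 15 => aF2 .* aF3 .- AScale (SQ (-1)) (aF3 .* aF2)
  | 16 => aE3 .* aF1 .- aF1 .* aE3 .+ aE2 .* aT (-1) 1 0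
  | 17 => aE3 .* aF2 .- aF2 .* aE3 .- AScale (SQ (-1)) (aE1 .* aT 0 1 (-1))
  | 18 => aE1 .* aF3 .- aF3 .* aE1 .+ AScale (SQ 1) (aF2 .* aT 1 (-1) 0)
  | 19 => aE2 .* aF3 .- aF3 .* aE2 .- aF1 .* aT 0 (-1) 1
  | 20 => AScale SK (aE3 .* aF3 .- aF3 .* aE3) .- (aT 1 0 (-1) .- aT (-1) 0 1)
  | _ => AZero
  end.

Definition relpoly (r : urel) : aexpr :=
  match r with
  | RTT a b c a' b' c' => aT a b c .* aT a' b' c' .- aT (a + a') (b + b') (c + c')
  | RT0 => aT 0 0 0 .- AOne
  | RTL l a b c => aT a b c .* AL l .- AScale (SQ (wt l a b c)) (AL l .* aT a b c)
  | RN n => fixed_rel n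
  end.

Definition is_base (r : urel) : bool :=
  match r with
  | RTL LE1 _ _ _ | RTL LE2 _ _ _ | RTL LF1 _ _ _ | RTL LF2 _ _ _ => true
  | RTL _ _ _ _ => false
  | RN n => Nat.ltb n 10
  | _ => true end.

Definition certterm := (laur * seq letter * urel * seq letter)%type.
Definition expand_cert (c : seq certterm) : seq term :=
  flatten (map (fun ct => let: (l, u, r, v) := ct in
     map (fun t => ((u ++ t.1) ++ v, lmul l t.2)) (expand (relpoly r))) c).

Definition kap_laur : laur := [:: (1%R, 1%R); ((-1)%R, (-1)%R)].

Definition cert_ok (P : urel -> bool) (N : nat) (e1 e2 : aexpr) (c : seq certterm) : bool :=
  all (fun ct => P ct.1.2) c &&
  tzero (map (tsmul (lexp kap_laur N)) (expand e1)
         ++ map topp (map (tsmul (lexp kap_laur N)) (expand e2))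
         ++ map topp (expand_cert c)).

Section Sound.
Variables (K : fieldType) (qp : K -> K) (A : algType K) (g : UqGens A).
Hypothesis qp0 : qp 0 = 1.
Hypothesis qpD : forall a b, qp (a + b) = qp a * qp b.
Hypothesis kap0 : kappa qp != 0.

Lemma iterms_cert c : iterms qp g (expand_cert c) =
  foldr (fun ct acc => let: (l, u, r, v) := ct in
     ilaur qp l *: (iword qp g u * iaexpr qp g (relpoly r) * iword qp g v) + acc) 0 c.
Proof.
elim: c => [|[[[l u] r] v] c IH] //=.
rewrite iterms_cat IH; congr (_ + _).
rewrite -(@expand_sound _ qp _ g qp0 qpD (relpoly r)).
elim: (expand (relpoly r)) => [|t ts IH2] /=; first by rewrite mulr0 mul0r scaler0.
rewrite IH2 /iterm /= !iword_cat (@ilaur_mul _ qp qpD).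
rewrite mulrDr mulrDl scalerDr; congr (_ + _).
by rewrite -scalerAr -scalerAl scalerA.
Qed.

Lemma kap_laurE : ilaur qp kap_laur = kappa qp.
Proof. by rewrite /= addr0 /kappa mul1r mulN1r. Qed.

Lemma cert_sound (P : urel -> bool)
  (HP : forall r, P r -> iaexpr qp g (relpoly r) = 0) N e1 e2 c :
  cert_ok P N e1 e2 c -> iaexpr qp g e1 = iaexpr qp g e2.
Proof.
case/andP=> hP /(tzero_sound qp g).
rewrite !iterms_cat !iterms_opp !iterms_smul; try exact: qpD.
rewrite !(@expand_sound _ qp _ g qp0 qpD) iterms_cert.
have -> : foldr (fun ct acc => let: (l, u, r, v) := ct in
     ilaur qp l *: (iword qp g u * iaexpr qp g (relpoly r) * iword qp g v) + acc) 0 c = 0.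
  elim: c hP => [|[[[l u] r] v] c IH] //= /andP[h1 h2].
  by rewrite HP // mulr0 mul0r scaler0 add0r IH.
rewrite oppr0 addr0 (ilaur_exp qp0 qpD) kap_laurE => /eqP.
rewrite -scalerBr scaler_eq0 expf_eq0 (negbTE kap0) andbF /= subr_eq0.
by move/eqP.
Qed.
End Sound.

Section Ops.
Variables (K : fieldType) (qp : K -> K) (A : algType K) (g : UqGens A).
Hypothesis qp0 : qp 0 = 1.
Hypothesis qpD : forall a b, qp (a + b) = qp a * qp b.
Hypothesis q2ne : qp 1 ^+ 2 != 1.
Hypothesis HR : Uq_relations qp g.

Local Notation T := (Tq g).

Lemma qpN a : qp (- a) = (qp a)^-1.
Proof.
have h : qp a * qp (- a) = 1 by rewrite -qpD subrr qp0.
have ua : qp a != 0 by apply/eqP => e; move: h; rewrite e mul0r => /eqP; rewrite eq_sym oner_eq0.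
by apply: (mulfI ua); rewrite h mulfV.
Qed.

Lemma qp_neq0 a : qp a != 0.
Proof.
apply/eqP => e; have := qpD a (- a); rewrite subrr qp0 e mul0r => /eqP.
by rewrite oner_eq0.
Qed.

Lemma kap_neq0 : kappa qp != 0.
Proof.
rewrite /kappa subr_eq0 qpN; apply: contra q2ne => /eqP e.
by rewrite expr2 {2}e mulfV ?qp_neq0.
Qed.

Lemma qint2E : qint2 qp = qp 1 + qp (-1).
Proof.
rewrite /qint2 /kappa.
have -> : qp 2 = qp 1 * qp 1 by rewrite -qpD.
have -> : qp (-2) = qp (-1) * qp (-1) by rewrite -qpD -opprD.
have hk : qp 1 - qp (-1) != 0 by exact: kap_neq0.
apply: (mulIf hk); rewrite divfK //.
by rewrite mulrDl !mulrBr; rewrite [qp (-1) * qp 1]mulrC; rewrite addrA subrK.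
Qed.

Lemma T0 : T 0 0 0 = 1. Proof. by case: HR. Qed.
Lemma TM a b c a' b' c' : T a b c * T a' b' c' = T (a + a') (b + b') (c + c').
Proof. by case: HR. Qed.

Lemma TV a b c : T (- a) (- b) (- c) * T a b c = 1.
Proof. by rewrite TM !addNr T0. Qed.

Lemma conj_move (x y : A) (a b c : K) s :
  T a b c * x * T (- a) (- b) (- c) = s *: y -> T a b c * x = s *: (y * T a b c).
Proof.
move=> h; rewrite -[LHS]mulr1 -(TV a b c) mulrA h.
by rewrite scalerAl.
Qed.

Lemma TE1 a b c : T a b c * E1 g = qp (a - b) *: (E1 g * T a b c).
Proof. by apply: conj_move; case: HR => _ _ [h _ _ _] _ _; apply: h. Qed.
Lemma TE2 a b c : T a b c * E2 g = qp (b - c) *: (E2 g * T a b c).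
Proof. by apply: conj_move; case: HR => _ _ [_ h _ _] _ _; apply: h. Qed.
Lemma TF1 a b c : T a b c * F1 g = qp (- (a - b)) *: (F1 g * T a b c).
Proof. by apply: conj_move; case: HR => _ _ [_ _ h _] _ _; apply: h. Qed.
Lemma TF2 a b c : T a b c * F2 g = qp (- (b - c)) *: (F2 g * T a b c).
Proof. by apply: conj_move; case: HR => _ _ [_ _ _ h] _ _; apply: h. Qed.

Lemma Tc_mul (t x y : A) s s' : t * x = s *: (x * t) -> t * y = s' *: (y * t) ->
  t * (x * y) = (s * s') *: (x * y * t).
Proof.
move=> hx hy; rewrite mulrA hx -scalerAl -[(x * t) * y]mulrA hy -scalerAr scalerA.
by rewrite mulrA.
Qed.

Lemma Tc_lin (t x y : A) s k : t * x = s *: (x * t) -> t * y = s *: (y * t) ->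
  t * (x - k *: y) = s *: ((x - k *: y) * t).
Proof.
move=> hx hy; rewrite mulrBr mulrBl -scalerAr hy hx scalerBr -scalerAl.
by rewrite !scalerA mulrC.
Qed.

Lemma TE3 a b c : T a b c * E3 qp g = qp (a - c) *: (E3 qp g * T a b c).
Proof.
apply: Tc_lin.
  by rewrite (Tc_mul (TE1 a b c) (TE2 a b c)) -qpD addrA subrK.
by rewrite (Tc_mul (TE2 a b c) (TE1 a b c)) -qpD addrC addrA subrK.
Qed.

Lemma TF3 a b c : T a b c * F3 qp g = qp (c - a) *: (F3 qp g * T a b c).
Proof.
apply: Tc_lin.
  rewrite (Tc_mul (TF2 a b c) (TF1 a b c)) -qpD; congr (_ *: _); congr qp.
  by rewrite -opprD addrC addrA subrK opprB.
rewrite (Tc_mul (TF1 a b c) (TF2 a b c)) -qpD; congr (_ *: _); congr qp.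
by rewrite -opprD addrA subrK opprB.
Qed.

Lemma base_ok r : is_base r -> iaexpr qp g (relpoly r) = 0.
Proof.
case: r => [a b c a' b' c'||l a b c|n] /=.
- by rewrite TM !intrD subrr.
- by move=> _; rewrite T0 subrr.
- case: l => //= _.
  + by rewrite TE1 intrB subrr.
  + by rewrite TE2 intrB subrr.
  + by rewrite TF1 intrB opprB subrr.
  + by rewrite TF2 intrB opprB subrr.
- case: HR => _ _ _ [c11 c22 c12 c21] [s1 s2 s3 s4].
  have kk : forall x : A, kappa qp *: ((kappa qp)^-1 *: x) = x.
    by move=> x; rewrite scalerA mulfV ?kap_neq0 // scale1r.
  case: n => [|[|[|[|[|[|[|[|[|[|n]]]]]]]]]] //= _.
  + by rewrite c11 kk subrr.
  + by rewrite c22 kk subrr.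
  + by rewrite qint2E in s1.
  + by rewrite qint2E in s2.
  + by rewrite qint2E in s3.
  + by rewrite qint2E in s4.
  + by rewrite subrr.
  + by rewrite subrr.
Qed.
End Ops.

Definition cert_OE21 : seq certterm :=
  [:: ([:: ((Posz 1), (Posz 1))], [::], RN 8, [::])].
Definition N_OE21 := 0%N.

Definition cert_OE31 : seq certterm :=
  [:: ([:: ((Posz 0), (Posz 1))], [::], RN 8, [:: LE1]);
  ([:: ((Negz 0), (Negz 0))], [:: LE1], RN 8, [::]);
  ([:: ((Negz 0), (Negz 0))], [::], RN 4, [::])].
Definition N_OE31 := 0%N.

Definition cert_OE23 : seq certterm :=
  [:: ([:: ((Posz 0), (Posz 1))], [:: LE2], RN 8, [::]);
  ([:: ((Negz 0), (Negz 0))], [::], RN 8, [:: LE2]);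
  ([:: ((Negz 0), (Negz 0))], [::], RN 5, [::])].
Definition N_OE23 := 0%N.

Definition cert_OF21 : seq certterm :=
  [:: ([:: ((Posz 0), (Negz 0))], [::], RN 9, [::])].
Definition N_OF21 := 0%N.

Definition cert_OF31 : seq certterm :=
  [:: ([:: ((Posz 0), (Posz 1))], [::], RN 9, [:: LF1]);
  ([:: ((Negz 0), (Negz 0))], [:: LF1], RN 9, [::]);
  ([:: ((Posz 0), (Posz 1))], [::], RN 6, [::])].
Definition N_OF31 := 0%N.

Definition cert_OF23 : seq certterm :=
  [:: ([:: ((Posz 0), (Posz 1))], [:: LF2], RN 9, [::]);
  ([:: ((Negz 0), (Negz 0))], [::], RN 9, [:: LF2]);
  ([:: ((Posz 0), (Posz 1))], [::], RN 7, [::])].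
Definition N_OF23 := 0%N.

Definition cert_C31 : seq certterm :=
  [:: ([:: ((Negz 0), (Negz 0)); ((Posz 1), (Posz 1))], [::], RN 8, [:: LF1]);
  ([:: ((Negz 0), (Posz 1)); ((Posz 1), (Negz 0))], [:: LF1], RN 8, [::]);
  ([:: ((Negz 0), (Negz 0)); ((Posz 1), (Posz 1))], [:: LE1], RN 3, [::]);
  ([:: ((Negz 0), (Negz 0))], [:: LE2], RN 0, [::]);
  ([:: ((Posz 0), (Posz 1))], [::], RN 0, [:: LE2]);
  ([:: ((Negz 1), (Posz 1)); ((Posz 0), (Negz 0))], [::], RN 3, [:: LE1]);
  ([:: ((Posz 0), (Posz 1))], [::], RTL LE2 (Posz 1) (Negz 0) (Posz 0), [::]);
  ([:: ((Posz 0), (Negz 0))], [::], RTL LE2 (Negz 0) (Posz 1) (Posz 0), [::])].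
Definition N_C31 := 1%N.

Definition cert_C32 : seq certterm :=
  [:: ([:: ((Negz 0), (Negz 0)); ((Posz 1), (Posz 1))], [::], RN 8, [:: LF2]);
  ([:: ((Negz 0), (Posz 1)); ((Posz 1), (Negz 0))], [:: LF2], RN 8, [::]);
  ([:: ((Posz 0), (Posz 1))], [:: LE1], RN 1, [::]);
  ([:: ((Negz 1), (Posz 1)); ((Posz 0), (Negz 0))], [:: LE2], RN 2, [::]);
  ([:: ((Negz 0), (Negz 0)); ((Posz 1), (Posz 1))], [::], RN 2, [:: LE2]);
  ([:: ((Negz 0), (Negz 0))], [::], RN 1, [:: LE1]);
  ([:: ((Negz 0), (Negz 0))], [::], RTL LE1 (Posz 0) (Posz 1) (Negz 0), [::]);
  ([:: ((Negz 0), (Posz 1))], [::], RTL LE1 (Posz 0) (Negz 0) (Posz 1), [::])].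
Definition N_C32 := 1%N.

Definition cert_C13 : seq certterm :=
  [:: ([:: ((Negz 0), (Negz 0)); ((Posz 1), (Posz 1))], [:: LE1], RN 9, [::]);
  ([:: ((Negz 0), (Posz 1)); ((Posz 1), (Negz 0))], [::], RN 9, [:: LE1]);
  ([:: ((Negz 0), (Negz 0)); ((Posz 1), (Posz 1))], [::], RN 2, [:: LF1]);
  ([:: ((Posz 1), (Negz 0))], [::], RN 0, [:: LF2]);
  ([:: ((Posz 0), (Posz 1))], [:: LF2], RN 0, [::]);
  ([:: ((Posz 0), (Posz 1)); ((Posz 2), (Negz 0))], [:: LF1], RN 2, [::]);
  ([:: ((Posz 1), (Negz 0))], [::], RTL LF2 (Posz 1) (Negz 0) (Posz 0), [::]);
  ([:: ((Posz 1), (Posz 1))], [::], RTL LF2 (Negz 0) (Posz 1) (Posz 0), [::])].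
Definition N_C13 := 1%N.

Definition cert_C23 : seq certterm :=
  [:: ([:: ((Negz 0), (Negz 0)); ((Posz 1), (Posz 1))], [:: LE2], RN 9, [::]);
  ([:: ((Negz 0), (Posz 1)); ((Posz 1), (Negz 0))], [::], RN 9, [:: LE2]);
  ([:: ((Posz 0), (Posz 1))], [::], RN 1, [:: LF1]);
  ([:: ((Posz 0), (Posz 1)); ((Posz 2), (Negz 0))], [::], RN 3, [:: LF2]);
  ([:: ((Negz 0), (Negz 0)); ((Posz 1), (Posz 1))], [:: LF2], RN 3, [::]);
  ([:: ((Posz 0), (Posz 1))], [::], RTL LF1 (Posz 0) (Posz 1) (Negz 0), [::]);
  ([:: ((Posz 0), (Negz 0))], [::], RTL LF1 (Posz 0) (Negz 0) (Posz 1), [::]);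
  ([:: ((Posz 1), (Negz 0))], [:: LF1], RN 1, [::])].
Definition N_C23 := 1%N.

Definition cert_C33 : seq certterm :=
  [:: ([:: ((Negz 2), (Negz 0)); ((Negz 0), (Posz 3)); ((Posz 1), (Negz 2)); ((Posz 3), (Posz 1))], [::], RN 8, [:: LF3]);
  ([:: ((Negz 2), (Posz 1)); ((Negz 0), (Negz 2)); ((Posz 1), (Posz 3)); ((Posz 3), (Negz 0))], [::], RN 9, [:: LE3]);
  ([:: ((Negz 2), (Negz 0)); ((Negz 0), (Posz 3)); ((Posz 1), (Negz 2)); ((Posz 3), (Posz 1))], [:: LE1; LE2], RN 9, [::]);
  ([:: ((Negz 3), (Posz 1)); ((Negz 1), (Negz 2)); ((Posz 0), (Posz 3)); ((Posz 2), (Negz 0))], [:: LE2; LE1], RN 9, [::]);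
  ([:: ((Negz 2), (Posz 1)); ((Negz 0), (Negz 2)); ((Posz 1), (Posz 3)); ((Posz 3), (Negz 0))], [:: LF2; LF1], RN 8, [::]);
  ([:: ((Negz 1), (Negz 0)); ((Posz 0), (Posz 3)); ((Posz 2), (Negz 2)); ((Posz 4), (Posz 1))], [:: LF1; LF2], RN 8, [::]);
  ([:: ((Negz 1), (Posz 1)); ((Posz 0), (Negz 1)); ((Posz 2), (Posz 1))], [:: LE1], RN 1, [:: LF1]);
  ([:: ((Negz 1), (Posz 1)); ((Posz 0), (Negz 2)); ((Posz 2), (Posz 3)); ((Posz 4), (Negz 0))], [:: LE1], RN 3, [:: LF2]);
  ([:: ((Negz 3), (Posz 1)); ((Negz 1), (Negz 2)); ((Posz 0), (Posz 3)); ((Posz 2), (Negz 0))], [:: LE2], RN 2, [:: LF1]);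
  ([:: ((Negz 1), (Posz 1)); ((Posz 0), (Negz 1)); ((Posz 2), (Posz 1))], [:: LE2], RN 0, [:: LF2]);
  ([:: ((Negz 2), (Negz 0)); ((Negz 0), (Posz 3)); ((Posz 1), (Negz 2)); ((Posz 3), (Posz 1))], [::], RN 2, [:: LE2; LF1]);
  ([:: ((Negz 1), (Posz 1)); ((Posz 0), (Negz 1)); ((Posz 2), (Posz 1))], [:: LE1], RTL LF1 (Posz 0) (Posz 1) (Negz 0), [::]);
  ([:: ((Negz 1), (Negz 0)); ((Posz 0), (Posz 2)); ((Posz 2), (Negz 0))], [:: LE1], RTL LF1 (Posz 0) (Negz 0) (Posz 1), [::]);
  ([:: ((Negz 0), (Negz 0)); ((Posz 1), (Posz 2)); ((Posz 3), (Negz 0))], [::], RN 0, [:: LE2; LF2]);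
  ([:: ((Negz 2), (Negz 0)); ((Negz 0), (Posz 2)); ((Posz 1), (Negz 0))], [::], RN 1, [:: LE1; LF1]);
  ([:: ((Negz 2), (Negz 0)); ((Negz 0), (Posz 3)); ((Posz 1), (Negz 2)); ((Posz 3), (Posz 1))], [::], RN 3, [:: LE1; LF2]);
  ([:: ((Negz 1), (Posz 1)); ((Posz 0), (Negz 1)); ((Posz 2), (Posz 1))], [:: LE2], RTL LF2 (Posz 1) (Negz 0) (Posz 0), [::]);
  ([:: ((Negz 1), (Negz 0)); ((Posz 0), (Posz 2)); ((Posz 2), (Negz 0))], [:: LE2], RTL LF2 (Negz 0) (Posz 1) (Posz 0), [::]);
  ([:: ((Negz 2), (Negz 0)); ((Negz 0), (Posz 3)); ((Posz 1), (Negz 2)); ((Posz 3), (Posz 1))], [:: LF2; LE1], RN 3, [::]);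
  ([:: ((Posz 0), (Negz 0)); ((Posz 2), (Posz 1))], [::], RN 0, [:: LT (Posz 0) (Posz 1) (Negz 0)]);
  ([:: ((Negz 1), (Posz 1)); ((Posz 0), (Negz 0))], [::], RN 0, [:: LT (Posz 0) (Negz 0) (Posz 1)]);
  ([:: ((Negz 0), (Negz 0)); ((Posz 1), (Posz 2)); ((Posz 3), (Negz 0))], [:: LF1; LE1], RN 1, [::]);
  ([:: ((Negz 0), (Negz 0)); ((Posz 1), (Posz 2)); ((Posz 3), (Negz 0))], [::], RTL LE2 (Posz 1) (Negz 0) (Posz 0), [:: LF2]);
  ([:: ((Negz 0), (Posz 1)); ((Posz 1), (Negz 1)); ((Posz 3), (Posz 1))], [::], RTL LE2 (Negz 0) (Posz 1) (Posz 0), [:: LF2]);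
  ([:: ((Negz 2), (Negz 0)); ((Negz 0), (Posz 2)); ((Posz 1), (Negz 0))], [:: LF2; LE2], RN 0, [::]);
  ([:: ((Negz 2), (Negz 0)); ((Negz 0), (Posz 2)); ((Posz 1), (Negz 0))], [::], RTL LE1 (Posz 0) (Posz 1) (Negz 0), [:: LF1]);
  ([:: ((Negz 2), (Posz 1)); ((Negz 0), (Negz 1)); ((Posz 1), (Posz 1))], [::], RTL LE1 (Posz 0) (Negz 0) (Posz 1), [:: LF1]);
  ([:: ((Negz 2), (Negz 0)); ((Negz 0), (Posz 3)); ((Posz 1), (Negz 2)); ((Posz 3), (Posz 1))], [:: LF1; LE2], RN 2, [::]);
  ([:: ((Posz 0), (Negz 0)); ((Posz 2), (Posz 1))], [::], RN 1, [:: LT (Posz 1) (Negz 0) (Posz 0)]);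
  ([:: ((Negz 1), (Posz 1)); ((Posz 0), (Negz 0))], [::], RN 1, [:: LT (Negz 0) (Posz 1) (Posz 0)]);
  ([:: ((Negz 1), (Posz 1)); ((Posz 0), (Negz 1)); ((Posz 2), (Posz 1))], [:: LF2], RN 0, [:: LE2]);
  ([:: ((Posz 0), (Negz 0)); ((Posz 2), (Posz 1))], [::], RTT (Posz 1) (Negz 0) (Posz 0) (Posz 0) (Posz 1) (Negz 0), [::]);
  ([:: ((Posz 0), (Posz 1)); ((Posz 2), (Negz 0))], [::], RTT (Negz 0) (Posz 1) (Posz 0) (Posz 0) (Posz 1) (Negz 0), [::]);
  ([:: ((Negz 1), (Posz 1)); ((Posz 0), (Negz 0))], [::], RTT (Posz 1) (Negz 0) (Posz 0) (Posz 0) (Negz 0) (Posz 1), [::]);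
  ([:: ((Negz 1), (Negz 0)); ((Posz 0), (Posz 1))], [::], RTT (Negz 0) (Posz 1) (Posz 0) (Posz 0) (Negz 0) (Posz 1), [::]);
  ([:: ((Negz 1), (Posz 1)); ((Posz 0), (Negz 2)); ((Posz 2), (Posz 3)); ((Posz 4), (Negz 0))], [:: LF1], RN 2, [:: LE2]);
  ([:: ((Negz 1), (Negz 0)); ((Posz 0), (Posz 2)); ((Posz 2), (Negz 0))], [:: LE2], RTL LF2 (Posz 1) (Negz 0) (Posz 0), [::]);
  ([:: ((Posz 0), (Posz 1)); ((Posz 2), (Negz 1)); ((Posz 4), (Posz 1))], [:: LE2], RTL LF2 (Negz 0) (Posz 1) (Posz 0), [::]);
  ([:: ((Negz 3), (Posz 1)); ((Negz 1), (Negz 2)); ((Posz 0), (Posz 3)); ((Posz 2), (Negz 0))], [:: LF2], RN 3, [:: LE1]);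
  ([:: ((Negz 3), (Negz 0)); ((Negz 1), (Posz 2)); ((Posz 0), (Negz 0))], [:: LE1], RTL LF1 (Posz 0) (Posz 1) (Negz 0), [::]);
  ([:: ((Negz 1), (Posz 1)); ((Posz 0), (Negz 1)); ((Posz 2), (Posz 1))], [:: LE1], RTL LF1 (Posz 0) (Negz 0) (Posz 1), [::]);
  ([:: ((Negz 1), (Posz 1)); ((Posz 0), (Negz 1)); ((Posz 2), (Posz 1))], [:: LF1], RN 1, [:: LE1]);
  ([:: ((Posz 0), (Negz 0)); ((Posz 2), (Posz 1))], [::], RTT (Posz 0) (Posz 1) (Negz 0) (Posz 1) (Negz 0) (Posz 0), [::]);
  ([:: ((Posz 0), (Posz 1)); ((Posz 2), (Negz 0))], [::], RTT (Posz 0) (Negz 0) (Posz 1) (Posz 1) (Negz 0) (Posz 0), [::]);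
  ([:: ((Negz 1), (Posz 1)); ((Posz 0), (Negz 0))], [::], RTT (Posz 0) (Posz 1) (Negz 0) (Negz 0) (Posz 1) (Posz 0), [::]);
  ([:: ((Negz 1), (Negz 0)); ((Posz 0), (Posz 1))], [::], RTT (Posz 0) (Negz 0) (Posz 1) (Negz 0) (Posz 1) (Posz 0), [::]);
  ([:: ((Negz 1), (Posz 1)); ((Posz 0), (Negz 1)); ((Posz 2), (Posz 1))], [:: LF2], RTL LE2 (Posz 1) (Negz 0) (Posz 0), [::]);
  ([:: ((Negz 1), (Negz 0)); ((Posz 0), (Posz 2)); ((Posz 2), (Negz 0))], [:: LF2], RTL LE2 (Negz 0) (Posz 1) (Posz 0), [::]);
  ([:: ((Posz 0), (Posz 1)); ((Posz 2), (Negz 0))], [::], RN 1, [:: LT (Posz 1) (Negz 0) (Posz 0)]);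
  ([:: ((Posz 0), (Negz 0)); ((Posz 2), (Posz 1))], [::], RN 1, [:: LT (Negz 0) (Posz 1) (Posz 0)]);
  ([:: ((Negz 1), (Posz 1)); ((Posz 0), (Negz 0))], [::], RN 0, [:: LT (Posz 0) (Posz 1) (Negz 0)]);
  ([:: ((Negz 1), (Negz 0)); ((Posz 0), (Posz 1))], [::], RN 0, [:: LT (Posz 0) (Negz 0) (Posz 1)]);
  ([:: ((Negz 1), (Posz 1)); ((Posz 0), (Negz 1)); ((Posz 2), (Posz 1))], [:: LF1], RTL LE1 (Posz 0) (Posz 1) (Negz 0), [::]);
  ([:: ((Negz 1), (Negz 0)); ((Posz 0), (Posz 2)); ((Posz 2), (Negz 0))], [:: LF1], RTL LE1 (Posz 0) (Negz 0) (Posz 1), [::]);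
  ([:: ((Posz 0), (Posz 1)); ((Posz 2), (Negz 0))], [::], RTT (Posz 0) (Posz 1) (Negz 0) (Posz 1) (Negz 0) (Posz 0), [::]);
  ([:: ((Posz 0), (Negz 0)); ((Posz 2), (Posz 1))], [::], RTT (Posz 0) (Negz 0) (Posz 1) (Posz 1) (Negz 0) (Posz 0), [::]);
  ([:: ((Posz 0), (Negz 0)); ((Posz 2), (Posz 1))], [::], RTT (Posz 0) (Posz 1) (Negz 0) (Negz 0) (Posz 1) (Posz 0), [::]);
  ([:: ((Posz 0), (Posz 1)); ((Posz 2), (Negz 0))], [::], RTT (Posz 0) (Negz 0) (Posz 1) (Negz 0) (Posz 1) (Posz 0), [::]);
  ([:: ((Negz 1), (Posz 1)); ((Posz 0), (Negz 0))], [::], RTT (Posz 1) (Negz 0) (Posz 0) (Posz 0) (Posz 1) (Negz 0), [::]);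
  ([:: ((Negz 1), (Negz 0)); ((Posz 0), (Posz 1))], [::], RTT (Negz 0) (Posz 1) (Posz 0) (Posz 0) (Posz 1) (Negz 0), [::]);
  ([:: ((Negz 1), (Negz 0)); ((Posz 0), (Posz 1))], [::], RTT (Posz 1) (Negz 0) (Posz 0) (Posz 0) (Negz 0) (Posz 1), [::]);
  ([:: ((Negz 1), (Posz 1)); ((Posz 0), (Negz 0))], [::], RTT (Negz 0) (Posz 1) (Posz 0) (Posz 0) (Negz 0) (Posz 1), [::])].
Definition N_C33 := 2%N.

Section Derived.
Variables (K : fieldType) (qp : K -> K) (A : algType K) (g : UqGens A).
Hypothesis qp0 : qp 0 = 1.
Hypothesis qpD : forall a b, qp (a + b) = qp a * qp b.
Hypothesis q2ne : qp 1 ^+ 2 != 1.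
Hypothesis HR : Uq_relations qp g.

Let bsound := cert_sound qp0 qpD (kap_neq0 qp0 qpD q2ne) (base_ok qp0 qpD q2ne HR).

Lemma d_OE21 : iaexpr qp g (fixed_rel 10) = 0.
Proof.
apply: (bsound (e1 := fixed_rel 10) (e2 := AZero) (N := N_OE21) (c := cert_OE21)).
by vm_compute.
Qed.

Lemma d_OE31 : iaexpr qp g (fixed_rel 11) = 0.
Proof.
apply: (bsound (e1 := fixed_rel 11) (e2 := AZero) (N := N_OE31) (c := cert_OE31)).
by vm_compute.
Qed.

Lemma d_OE23 : iaexpr qp g (fixed_rel 12) = 0.
Proof.
apply: (bsound (e1 := fixed_rel 12) (e2 := AZero) (N := N_OE23) (c := cert_OE23)).
by vm_compute.
Qed.

Lemma d_OF21 : iaexpr qp g (fixed_rel 13) = 0.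
Proof.
apply: (bsound (e1 := fixed_rel 13) (e2 := AZero) (N := N_OF21) (c := cert_OF21)).
by vm_compute.
Qed.

Lemma d_OF31 : iaexpr qp g (fixed_rel 14) = 0.
Proof.
apply: (bsound (e1 := fixed_rel 14) (e2 := AZero) (N := N_OF31) (c := cert_OF31)).
by vm_compute.
Qed.

Lemma d_OF23 : iaexpr qp g (fixed_rel 15) = 0.
Proof.
apply: (bsound (e1 := fixed_rel 15) (e2 := AZero) (N := N_OF23) (c := cert_OF23)).
by vm_compute.
Qed.

Lemma d_C31 : iaexpr qp g (fixed_rel 16) = 0.
Proof.
apply: (bsound (e1 := fixed_rel 16) (e2 := AZero) (N := N_C31) (c := cert_C31)).
by vm_compute.
Qed.

Lemma d_C32 : iaexpr qp g (fixed_rel 17) = 0.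
Proof.
apply: (bsound (e1 := fixed_rel 17) (e2 := AZero) (N := N_C32) (c := cert_C32)).
by vm_compute.
Qed.

Lemma d_C13 : iaexpr qp g (fixed_rel 18) = 0.
Proof.
apply: (bsound (e1 := fixed_rel 18) (e2 := AZero) (N := N_C13) (c := cert_C13)).
by vm_compute.
Qed.

Lemma d_C23 : iaexpr qp g (fixed_rel 19) = 0.
Proof.
apply: (bsound (e1 := fixed_rel 19) (e2 := AZero) (N := N_C23) (c := cert_C23)).
by vm_compute.
Qed.

Lemma d_C33 : iaexpr qp g (fixed_rel 20) = 0.
Proof.
apply: (bsound (e1 := fixed_rel 20) (e2 := AZero) (N := N_C33) (c := cert_C33)).
by vm_compute.
Qed.

Lemma all_ok r : iaexpr qp g (relpoly r) = 0.
Proof.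
case Hb: (is_base r); first exact: base_ok.
case: r Hb => [a b c a' b' c'||l a b c|n] //.
- case: l => //=.
  + by move=> _; rewrite TE3 // intrB subrr.
  + by move=> _; rewrite TF3 // intrB subrr.
  + move=> x y z _; rewrite qp0 scale1r !(TM HR); first by rewrite [a%:~R + _]addrC [b%:~R + _]addrC [c%:~R + _]addrC subrr.
- move=> Hn.
  do 10! (case: n Hn => [|n] Hn; first by []).
  case: n Hn => [|n] _; first exact: d_OE21.
  case: n => [|n]; first exact: d_OE31.
  case: n => [|n]; first exact: d_OE23.
  case: n => [|n]; first exact: d_OF21.
  case: n => [|n]; first exact: d_OF31.
  case: n => [|n]; first exact: d_OF23.
  case: n => [|n]; first exact: d_C31.
  case: n => [|n]; first exact: d_C32.
  case: n => [|n]; first exact: d_C13.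
  case: n => [|n]; first exact: d_C23.
  case: n => [|n]; first exact: d_C33.
  by [].
Qed.
End Derived.

Ltac reifyI x :=
  lazymatch x with
  | 0%R => constr:(Posz 0)
  | 1%R => constr:(Posz 1)
  | (- ?y)%R => let r := reifyI y in constr:((- r)%R)
  | (?n%:R)%R => constr:(Posz n)
  | _ => fail 100 "reifyI" x
  end.

Ltac reifyS qp s :=
  lazymatch s with
  | qp ?x => let r := reifyI x in constr:(SQ r)
  | kappa qp => constr:(SK)
  | 1%R => constr:(SOne)
  | 0%R => constr:(SZero)
  | (?a + ?b)%R => let x := reifyS qp a in let y := reifyS qp b in constr:(SAdd x y)
  | (?a * ?b)%R => let x := reifyS qp a in let y := reifyS qp b in constr:(SMul x y)
  | (- ?a)%R => let x := reifyS qp a in constr:(SOpp x)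
  | (?a ^+ ?n)%R => let x := reifyS qp a in constr:(SExp x n)
  | (?n%:R)%R => constr:(SNat n)
  | _ => fail 100 "reifyS" s
  end.

Ltac reifyA qp g t :=
  lazymatch t with
  | iaexpr _ _ ?e => e
  | E1 g => constr:(AL LE1)
  | E2 g => constr:(AL LE2)
  | F1 g => constr:(AL LF1)
  | F2 g => constr:(AL LF2)
  | E3 qp g => constr:(AL LE3)
  | F3 qp g => constr:(AL LF3)
  | Tq g ?x ?y ?z => let a := reifyI x in let b := reifyI y in let c := reifyI z in
                     constr:(AL (LT a b c))
  | 1%R => constr:(AOne)
  | 0%R => constr:(AZero)
  | (?a + ?b)%R => let x := reifyA qp g a in let y := reifyA qp g b in constr:(AAdd x y)
  | (?a * ?b)%R => let x := reifyA qp g a in let y := reifyA qp g b in constr:(AMul x y)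
  | (- ?a)%R => let x := reifyA qp g a in constr:(AOpp x)
  | (?s *: ?a)%R => let x := reifyS qp s in let y := reifyA qp g a in constr:(AScale x y)
  | _ => fail 100 "reifyA" t
  end.

Ltac reify_print qp g :=
  lazymatch goal with
  | |- ?l = ?r =>
    let e1 := reifyA qp g l in let e2 := reifyA qp g r in
    let v := eval vm_compute in (tnorm (expand (AAdd e1 (AOpp e2)))) in
    idtac "REIFY_BEGIN"; idtac v; idtac "REIFY_END"
  end.

Ltac refl_close qp g sound N c :=
  lazymatch goal with
  | |- ?l = ?r =>
    let e1 := reifyA qp g l in let e2 := reifyA qp g r in
    apply: (sound N e1 e2 c); vm_compute; reflexivity
  end.

Section Ser.
Variables (K : fieldType) (A : algType K).
Implicit Types (f g h : series A).

Lemma sext f g : (forall n, f n = g n) -> f = g.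
Proof. exact: functional_extensionality. Qed.

Lemma pmul_rev f g n : pmul f g n = \sum_(j < n.+1) f (n - j)%N * g j.
Proof.
rewrite /pmul (reindex_inj rev_ord_inj) /=.
by apply: eq_bigr => j _; rewrite subKn // -ltnS.
Qed.

Lemma pmulA f g h : pmul f (pmul g h) = pmul (pmul f g) h.
Proof.
apply: sext => i; rewrite [LHS]/pmul [RHS]pmul_rev.
pose coef3 j k := f j * (g (i - j - k)%N * h k).
transitivity (\sum_(j < i.+1) \sum_(k < i.+1 | (k <= i - j)%N) coef3 j k).
  apply: eq_bigr => /= j _; rewrite pmul_rev big_distrr /=.
  by rewrite (big_ord_narrow_leq (leq_subr _ _)).
rewrite (exchange_big_dep predT) //=; apply: eq_bigr => k _.
transitivity (\sum_(j < i.+1 | (j <= i - k)%N) coef3 j k).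
  apply: eq_bigl => j; rewrite -ltnS -(ltnS j) -!subSn ?leq_ord //.
  by rewrite -subn_gt0 -(subn_gt0 j) -!subnDA addnC.
rewrite (big_ord_narrow_leq (leq_subr _ _)) [pmul f g _]/pmul big_distrl /=.
by apply: eq_bigr => j _; rewrite /coef3 -!subnDA addnC mulrA.
Qed.

Lemma pmulDl f g h : pmul (padd f g) h = padd (pmul f h) (pmul g h).
Proof. by apply: sext => n; rewrite /pmul /padd -big_split /=; apply: eq_bigr => i _; rewrite mulrDl. Qed.
Lemma pmulDr f g h : pmul h (padd f g) = padd (pmul h f) (pmul h g).
Proof. by apply: sext => n; rewrite /pmul /padd -big_split /=; apply: eq_bigr => i _; rewrite mulrDr. Qed.
Lemma pmulBl f g h : pmul (psub f g) h = psub (pmul f h) (pmul g h).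
Proof. by apply: sext => n; rewrite /pmul /psub -sumrB /=; apply: eq_bigr => i _; rewrite mulrBl. Qed.
Lemma pmulBr f g h : pmul h (psub f g) = psub (pmul h f) (pmul h g).
Proof. by apply: sext => n; rewrite /pmul /psub -sumrB /=; apply: eq_bigr => i _; rewrite mulrBr. Qed.

Lemma pmulCl (a : A) g n : pmul (pC a) g n = a * g n.
Proof. by rewrite /pmul big_ord_recl /= subn0 big1 ?addr0 // => i _; rewrite mul0r. Qed.
Lemma pmulCr (a : A) g n : pmul g (pC a) n = g n * a.
Proof. by rewrite pmul_rev big_ord_recl /= subn0 big1 ?addr0 // => i _; rewrite mulr0. Qed.

Lemma pmul1l f : pmul (pC 1) f = f.
Proof. by apply: sext => n; rewrite pmulCl mul1r. Qed.
Lemma pmul1r f : pmul f (pC 1) = f.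
Proof. by apply: sext => n; rewrite pmulCr mulr1. Qed.

Lemma pmulCC (a b : A) : pmul (pC a) (pC b) = pC (a * b).
Proof. by apply: sext => n; rewrite pmulCl; case: n => [|n] //=; rewrite mulr0. Qed.

Lemma psubK f g : padd (psub f g) g = f.
Proof. by apply: sext => n; rewrite /padd /psub subrK. Qed.

Lemma ppow_low f k n : f 0%N = 0 -> (n < k)%N -> ppow f k n = 0.
Proof.
move=> f0; elim: k n => [|k IH] n //= lt.
rewrite /pmul big_ord_recl /= f0 mul0r add0r big1 // => i _.
rewrite IH ?mulr0 //; rewrite /bump leq0n add1n; have := ltn_ord i; lia.
Qed.

Lemma pinv_r f : f 0%N = 1 -> pmul f (pinv f) = pC 1.
Proof.
move=> f0; set g := psub (pC 1) f.
have g0 : g 0%N = 0 by rewrite /g /psub /= f0 subrr.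
have fE : f = psub (pC 1) g by apply: sext => n; rewrite /g /psub opprB addrC subrK.
have gS : forall n, pmul g (pinv f) n = pinv f n - pC 1 n.
  move=> n; rewrite /pmul.
  transitivity (\sum_(i < n.+1) \sum_(k < n.+1) g i * ppow g k (n - i)%N).
    apply: eq_bigr => i _; rewrite /pinv big_distrr /=.
    rewrite (big_ord_widen n.+1 (fun k => g i * ppow g k (n - i)%N)) ?ltnS ?leq_subr //.
    rewrite [RHS](bigID (fun k : 'I_n.+1 => k < (n - i).+1)%N) /=.
    rewrite [X in _ = _ + X]big1 ?addr0 // => k; rewrite -leqNgt => lt.
    by rewrite ppow_low ?mulr0.
  rewrite exchange_big /=.
  transitivity (\sum_(k < n.+1) ppow g k.+1 n).
    by apply: eq_bigr => k _.
  rewrite [LHS]big_ord_recr ppow_low // /= addr0 /pinv [in RHS]big_ord_recl /=.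
  by rewrite addrAC subrr add0r.
apply: sext => n.
rewrite {1}fE pmulBl /psub pmul1l gS.
by rewrite opprB addrC subrK.
Qed.

Lemma pinv0 f : pinv f 0%N = 1.
Proof. by rewrite /pinv big_ord_recl big_ord0 addr0. Qed.

Lemma pinv_l f : f 0%N = 1 -> pmul (pinv f) f = pC 1.
Proof.
move=> f0; have h1 := pinv_r f0.
have h2 := pinv_r (pinv0 f).
have e : pinv (pinv f) = f.
  by rewrite -[LHS]pmul1l -h1 -pmulA h2 pmul1r.
by rewrite -{2}e h2.
Qed.

Lemma inv_uniq_l f h : f 0%N = 1 -> pmul h f = pC 1 -> h = pinv f.
Proof. by move=> f0 e; rewrite -[h]pmul1r -(pinv_r f0) pmulA e pmul1l. Qed.
Lemma inv_uniq_r f h : f 0%N = 1 -> pmul f h = pC 1 -> h = pinv f.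
Proof. by move=> f0 e; rewrite -[h]pmul1l -(pinv_l f0) -pmulA e pmul1r. Qed.

Lemma pmul0 f g : (pmul f g) 0%N = f 0%N * g 0%N.
Proof. by rewrite /pmul big_ord_recl big_ord0 addr0. Qed.

Lemma pinv_mul f g : f 0%N = 1 -> g 0%N = 1 -> pinv (pmul f g) = pmul (pinv g) (pinv f).
Proof.
move=> f0 g0; symmetry; apply: inv_uniq_l; first by rewrite pmul0 f0 g0 mulr1.
by rewrite -pmulA [pmul (pinv f) _]pmulA pinv_l // pmul1l pinv_l.
Qed.

Lemma pinvK f : f 0%N = 1 -> pinv (pinv f) = f.
Proof. by move=> f0; symmetry; apply: inv_uniq_l; [exact: pinv0| exact: pinv_r]. Qed.

Lemma psubst_mul c f g : psubst c (pmul f g) = pmul (psubst c f) (psubst c g).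
Proof.
apply: sext => n; rewrite /psubst /pmul scaler_sumr; apply: eq_bigr => i _.
rewrite -scalerAl -scalerAr !scalerA -exprD subnKC //.
by rewrite -ltnS.
Qed.
Lemma psubst_sub c f g : psubst c (psub f g) = psub (psubst c f) (psubst c g).
Proof. by apply: sext => n; rewrite /psubst /psub scalerBr. Qed.
Lemma psubst_add c f g : psubst c (padd f g) = padd (psubst c f) (psubst c g).
Proof. by apply: sext => n; rewrite /psubst /padd scalerDr. Qed.
Lemma psubst_C c (a : A) : psubst c (pC a) = pC a.
Proof. by apply: sext => -[|n]; rewrite /psubst /= ?expr0 ?scale1r ?scaler0. Qed.
Lemma psubst_comp c d f : psubst c (psubst d f) = psubst (c * d) f.
Proof. by apply: sext => n; rewrite /psubst scalerA exprMn. Qed.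
Lemma psubst1 f : psubst 1 f = f.
Proof. by apply: sext => n; rewrite /psubst expr1n scale1r. Qed.
Lemma psubst_inv c f : f 0%N = 1 -> psubst c (pinv f) = pinv (psubst c f).
Proof.
move=> f0; apply: inv_uniq_l; first by rewrite /psubst expr0 scale1r.
by rewrite -psubst_mul pinv_l // psubst_C.
Qed.

Definition ps (l : seq A) : series A := fun n => nth 0 l n.

Lemma ps_ext l1 l2 : (forall n, (n < maxn (size l1) (size l2))%N -> nth 0 l1 n = nth 0 l2 n) -> ps l1 = ps l2.
Proof.
move=> h; apply: sext => n; rewrite /ps.
case: (ltnP n (maxn (size l1) (size l2))) => [lt|]; first exact: h.
by rewrite geq_max => /andP[h1 h2]; rewrite !nth_default.
Qed.

Fixpoint lsub (l1 l2 : seq A) : seq A :=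
  match l1, l2 with
  | x :: l1', y :: l2' => (x - y) :: lsub l1' l2'
  | [::], _ => map (fun y => - y) l2
  | _, [::] => l1 end.
Fixpoint ladd (l1 l2 : seq A) : seq A :=
  match l1, l2 with
  | x :: l1', y :: l2' => (x + y) :: ladd l1' l2'
  | [::], _ => l2
  | _, [::] => l1 end.
Fixpoint lconv (l1 l2 : seq A) : seq A :=
  match l1 with
  | [::] => [::]
  | x :: l1' => ladd (map (fun y => x * y) l2) (0 :: lconv l1' l2) end.
Fixpoint lscl (c : K) (l : seq A) : seq A :=
  match l with
  | [::] => [::]
  | x :: l' => x :: map (fun y => c *: y) (lscl c l') end.

Lemma nth_map0 (h : A -> A) l n : h 0 = 0 -> nth 0 (map h l) n = h (nth 0 l n).
Proof. by move=> h0; elim: l n => [|x l IH] [|n] //=. Qed.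

Lemma nth_lsub l1 l2 n : nth 0 (lsub l1 l2) n = nth 0 l1 n - nth 0 l2 n.
Proof.
elim: l1 l2 n => [|x l1 IH] [|y l2] [|n] //=; rewrite ?subr0 ?sub0r //.
by rewrite nth_map0 ?oppr0.
Qed.

Lemma nth_ladd l1 l2 n : nth 0 (ladd l1 l2) n = nth 0 l1 n + nth 0 l2 n.
Proof. by elim: l1 l2 n => [|x l1 IH] [|y l2] [|n] //=; rewrite ?nth_nil ?addr0 ?add0r. Qed.

Lemma nth_lconv l1 l2 n : nth 0 (lconv l1 l2) n = \sum_(i < n.+1) nth 0 l1 i * nth 0 l2 (n - i).
Proof.
elim: l1 n => [|x l1 IH] n /=.
  by rewrite nth_nil big1 // => i _; rewrite nth_nil mul0r.
rewrite nth_ladd nth_map0 ?mulr0 // big_ord_recl /= subn0; congr (_ + _).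
case: n => [|n] /=; first by rewrite big_ord0.
by rewrite IH; apply: eq_bigr => i _.
Qed.

Lemma nth_lscl c l n : nth 0 (lscl c l) n = c ^+ n *: nth 0 l n.
Proof.
elim: l n => [|x l IH] [|n] /=; rewrite ?scaler0 ?expr0 ?scale1r //.
by rewrite nth_map0 ?scaler0 // IH scalerA -exprS.
Qed.

Lemma psub_ps l1 l2 : psub (ps l1) (ps l2) = ps (lsub l1 l2).
Proof. by apply: sext => n; rewrite /psub /ps nth_lsub. Qed.
Lemma padd_ps l1 l2 : padd (ps l1) (ps l2) = ps (ladd l1 l2).
Proof. by apply: sext => n; rewrite /padd /ps nth_ladd. Qed.
Lemma pmul_ps l1 l2 : pmul (ps l1) (ps l2) = ps (lconv l1 l2).
Proof. by apply: sext => n; rewrite /pmul /ps nth_lconv. Qed.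
Lemma psubst_ps c l : psubst c (ps l) = ps (lscl c l).
Proof. by apply: sext => n; rewrite /psubst /ps nth_lscl. Qed.
Lemma pC_ps (a : A) : pC a = ps [:: a].
Proof. by apply: sext => -[|[|n]]. Qed.
Lemma pX_ps (a : A) : pX a = ps [:: 0; a].
Proof. by apply: sext => -[|[|[|n]]]. Qed.

Lemma pmulXl (b : A) f n : pmul (pX b) f n = if n is n'.+1 then b * f n' else 0.
Proof.
case: n => [|n]; first by rewrite /pmul big_ord_recl big_ord0 /= mul0r addr0.
rewrite /pmul big_ord_recl /= mul0r add0r big_ord_recl /= subSS subn0 big1 ?addr0 // => i _.
by rewrite /bump /= mul0r.
Qed.

Lemma pmulXr (b : A) f n : pmul f (pX b) n = if n is n'.+1 then f n' * b else 0.
Proof.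
case: n => [|n]; first by rewrite pmul_rev big_ord_recl big_ord0 /= mulr0 addr0.
rewrite pmul_rev big_ord_recl /= mulr0 add0r big_ord_recl /= subSS subn0 big1 ?addr0 // => i _.
by rewrite /bump /= mulr0.
Qed.

Lemma pX_central (b : A) f : (forall x, b * x = x * b) -> pmul (pX b) f = pmul f (pX b).
Proof. by move=> h; apply: sext => -[|n]; rewrite pmulXl pmulXr. Qed.

Lemma scal1_comm (c : K) (x : A) : (c *: 1) * x = x * (c *: 1).
Proof. by rewrite -scalerAl -scalerAr mul1r mulr1. Qed.

Lemma psubst_X c (b : A) : psubst c (pX b) = pX (c *: b).
Proof. by apply: sext => -[|[|n]]; rewrite /psubst /= ?scaler0 ?expr1. Qed.

Lemma pmulXC (b c : A) : pmul (pX b) (pC c) = pX (b * c).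
Proof. by apply: sext => -[|[|n]]; rewrite pmulXl //= mulr0. Qed.

Definition pshift f : series A := fun n => f n.+1.
Lemma pshiftK f : f 0%N = 0 -> pmul pzeta (pshift f) = f.
Proof. by move=> f0; apply: sext => -[|n]; rewrite pmulXl ?mul1r. Qed.
Lemma pshift_ps x l : pshift (ps (x :: l)) = ps l.
Proof. by []. Qed.

Lemma comm_inv f h y : f 0%N = 1 -> h 0%N = 1 -> pmul f y = pmul y h ->
  pmul y (pinv h) = pmul (pinv f) y.
Proof.
move=> f0 h0 e.
symmetry; rewrite -[pmul (pinv f) y]pmul1r -(pinv_r h0) pmulA.
rewrite -[pmul (pmul (pinv f) y) h]pmulA -e.
by rewrite [pmul (pinv f) (pmul f y)]pmulA pinv_l // pmul1l.
Qed.

Lemma psubB3 f g h : psub (psub f g) h = psub f (padd g h).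
Proof. by apply: sext => n; rewrite /psub /padd opprD addrA. Qed.

Lemma psubKr f g : psub f (psub f g) = g.
Proof. by apply: sext => n; rewrite /psub opprB addrC subrK. Qed.

End Ser.

Section Main.
Variables (K : fieldType) (qp : K -> K) (A : algType K) (g : UqGens A).
Hypothesis qp0 : qp 0 = 1.
Hypothesis qpD : forall a b, qp (a + b) = qp a * qp b.
Hypothesis q2ne : qp 1 ^+ 2 != 1.
Hypothesis HR : Uq_relations qp g.

Let sound := cert_sound qp0 qpD (kap_neq0 qp0 qpD q2ne) (P := fun _ => true)
  (fun r _ => all_ok qp0 qpD q2ne HR r).

Local Notation a := (N'11 g).
Local Notation d := (N'22 g).
Local Notation d3 := (N'33 g).
Local Notation Yc := (N'21 qp g).
Local Notation Xc := (N'12 qp g).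
Local Notation X13 := (N'13 qp g).
Local Notation X23 := (N'23 qp g).
Local Notation Y31 := (N'31 qp g).
Local Notation Y32 := (N'32 qp g).
Local Notation s := (psubst (qp (-2))).

Definition Pz := psub (pmul (psubst (qp 2) a) d) (pmul pzeta (pmul Yc Xc)).
Definition zw := s (@pzeta K A).
Definition Vz := psub (pmul a Y32) (pmul zw (pmul Y31 Xc)).
Definition Uz := psub (pmul a X23) (pmul Yc X13).
Definition Ez := pmul Y31 X13.
Definition Dz := psub (pmul Pz (s d3)) (charpoly qp g).
Definition G2 := pmul (pC (qp 2 *: 1)) (pshift Dz).

Lemma charpoly_ps : charpoly qp g = ps [:: 1; - C1 qp g; - C2 qp g; - C3 g].
Proof. by apply: sext => -[|[|[|[|n]]]] //; rewrite /ps /= nth_nil. Qed.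

Ltac tops := rewrite /G2 /Dz /Pz /Vz /Uz /Ez /zw /pzeta /N'11 /N'22 /N'33 /N'21 /N'12 /N'13 /N'23 /N'31 /N'32 ?charpoly_ps ?pshift_ps;
  rewrite ?(pC_ps, pX_ps, psub_ps, padd_ps, pmul_ps, psubst_ps) /= ?pshift_ps;
  rewrite ?(pC_ps, pX_ps, psub_ps, padd_ps, pmul_ps, psubst_ps) /=.

Lemma L1 : pmul (psubst (qp 2) a) Yc = pmul Yc a.
Proof.
tops; apply: ps_ext => n /=.
case: n => [|n] Hn /=; first refl_close qp g sound 0%N ([:: ] : seq certterm).
case: n Hn => [|n] Hn /=; first refl_close qp g sound 0%N ([:: ([:: ((Posz 1), (Posz 1)); ((Posz 3), (Negz 0))], [::], RTL LE1 (Negz 1) (Posz 0) (Posz 0), [::])] : seq certterm).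
by [].
Qed.

Lemma L3 : pmul a Y31 = pmul Y31 (s a).
Proof.
tops; apply: ps_ext => n /=.
case: n => [|n] Hn /=; first refl_close qp g sound 0%N ([:: ] : seq certterm).
case: n Hn => [|n] Hn /=; first refl_close qp g sound 0%N ([:: ([:: ((Negz 0), (Posz 1)); ((Posz 1), (Negz 0))], [::], RTL LE3 (Negz 1) (Posz 0) (Posz 0), [::])] : seq certterm).
by [].
Qed.

Lemma L5 : pmul a Pz = pmul Pz a.
Proof.
tops; apply: ps_ext => n /=.
case: n => [|n] Hn /=; first refl_close qp g sound 0%N ([:: ] : seq certterm).
case: n Hn => [|n] Hn /=; first refl_close qp g sound 0%N ([:: ] : seq certterm).
case: n Hn => [|n] Hn /=; first refl_close qp g sound 1%N ([:: ([:: ((Negz 0), (Negz 0)); ((Posz 1), (Posz 1))], [::], RTT (Negz 1) (Posz 0) (Posz 0) (Posz 0) (Negz 1) (Posz 0), [::]);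
  ([:: ((Negz 0), (Negz 0)); ((Posz 1), (Posz 2)); ((Posz 3), (Negz 0))], [::], RN 0, [:: LT (Negz 0) (Negz 0) (Posz 0); LT (Negz 1) (Posz 0) (Posz 0)]);
  ([:: ((Negz 0), (Posz 1)); ((Posz 1), (Negz 0))], [::], RTT (Posz 0) (Negz 1) (Posz 0) (Negz 1) (Posz 0) (Posz 0), [::]);
  ([:: ((Negz 1), (Negz 0)); ((Posz 0), (Posz 3)); ((Posz 2), (Negz 2)); ((Posz 4), (Posz 1))], [::], RTL LE1 (Negz 1) (Posz 0) (Posz 0), [:: LF1; LT (Negz 0) (Negz 0) (Posz 0)]);
  ([:: ((Negz 1), (Posz 1)); ((Posz 0), (Negz 2)); ((Posz 2), (Posz 3)); ((Posz 4), (Negz 0))], [:: LF1; LE1], RTT (Negz 0) (Negz 0) (Posz 0) (Negz 1) (Posz 0) (Posz 0), [::]);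
  ([:: ((Negz 0), (Negz 0)); ((Posz 1), (Posz 2)); ((Posz 3), (Negz 0))], [::], RTT (Posz 1) (Negz 0) (Posz 0) (Negz 0) (Negz 0) (Posz 0), [:: LT (Negz 1) (Posz 0) (Posz 0)]);
  ([:: ((Negz 0), (Posz 1)); ((Posz 1), (Negz 1)); ((Posz 3), (Posz 1))], [::], RTT (Negz 0) (Posz 1) (Posz 0) (Negz 0) (Negz 0) (Posz 0), [:: LT (Negz 1) (Posz 0) (Posz 0)]);
  ([:: ((Negz 3), (Negz 0)); ((Negz 1), (Posz 3)); ((Posz 0), (Negz 2)); ((Posz 2), (Posz 1))], [:: LE1], RTL LF1 (Negz 1) (Posz 0) (Posz 0), [:: LT (Negz 0) (Negz 0) (Posz 0)]);
  ([:: ((Negz 0), (Negz 0)); ((Posz 1), (Posz 2)); ((Posz 3), (Negz 0))], [::], RTT (Posz 0) (Negz 1) (Posz 0) (Negz 1) (Posz 0) (Posz 0), [::]);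
  ([:: ((Negz 0), (Posz 1)); ((Posz 1), (Negz 1)); ((Posz 3), (Posz 1))], [::], RTT (Negz 1) (Posz 0) (Posz 0) (Negz 1) (Posz 0) (Posz 0), [::]);
  ([:: ((Negz 0), (Posz 1)); ((Posz 1), (Negz 1)); ((Posz 3), (Posz 1))], [::], RN 0, [:: LT (Negz 1) (Posz 0) (Posz 0); LT (Negz 0) (Negz 0) (Posz 0)]);
  ([:: ((Negz 1), (Negz 0)); ((Posz 0), (Posz 3)); ((Posz 2), (Negz 2)); ((Posz 4), (Posz 1))], [:: LF1; LE1], RTT (Negz 1) (Posz 0) (Posz 0) (Negz 0) (Negz 0) (Posz 0), [::]);
  ([:: ((Negz 0), (Posz 1)); ((Posz 1), (Negz 1)); ((Posz 3), (Posz 1))], [::], RTT (Posz 1) (Negz 0) (Posz 0) (Negz 1) (Posz 0) (Posz 0), [:: LT (Negz 0) (Negz 0) (Posz 0)]);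
  ([:: ((Negz 0), (Negz 0)); ((Posz 1), (Posz 2)); ((Posz 3), (Negz 0))], [::], RTT (Negz 0) (Posz 1) (Posz 0) (Negz 1) (Posz 0) (Posz 0), [:: LT (Negz 0) (Negz 0) (Posz 0)]);
  ([:: ((Negz 0), (Posz 1)); ((Posz 1), (Negz 1)); ((Posz 3), (Posz 1))], [::], RTT (Negz 0) (Negz 0) (Posz 0) (Negz 0) (Negz 0) (Posz 0), [::]);
  ([:: ((Negz 0), (Negz 0)); ((Posz 1), (Posz 2)); ((Posz 3), (Negz 0))], [::], RTT (Negz 2) (Posz 1) (Posz 0) (Negz 0) (Negz 0) (Posz 0), [::])] : seq certterm).
case: n Hn => [|n] Hn /=; first refl_close qp g sound 0%N ([:: ([:: ((Posz 2), (Posz 1))], [::], RTT (Negz 1) (Posz 0) (Posz 0) (Posz 0) (Negz 1) (Posz 0), [:: LT (Negz 1) (Posz 0) (Posz 0)]);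
  ([:: ((Posz 2), (Negz 0))], [::], RTT (Negz 1) (Posz 0) (Posz 0) (Negz 1) (Posz 0) (Posz 0), [:: LT (Posz 0) (Negz 1) (Posz 0)]);
  ([:: ((Posz 2), (Posz 1))], [::], RTT (Negz 1) (Negz 1) (Posz 0) (Negz 1) (Posz 0) (Posz 0), [::]);
  ([:: ((Posz 2), (Negz 0))], [::], RTT (Negz 3) (Posz 0) (Posz 0) (Posz 0) (Negz 1) (Posz 0), [::])] : seq certterm).
by [].
Qed.

Lemma LI : pmul Pz Vz = pmul (psubst (qp 2) Vz) (s Pz).
Proof.
tops; apply: ps_ext => n /=.
case: n => [|n] Hn /=; first refl_close qp g sound 0%N ([:: ] : seq certterm).
case: n Hn => [|n] Hn /=; first refl_close qp g sound 1%N ([:: ([:: ((Negz 3), (Posz 1)); ((Negz 1), (Negz 3)); ((Posz 0), (Posz 6)); ((Posz 2), (Negz 3)); ((Posz 4), (Posz 1))], [::], RN 16, [:: LT (Negz 0) (Negz 0) (Posz 0)]);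
  ([:: ((Negz 1), (Negz 0)); ((Posz 0), (Posz 2)); ((Posz 2), (Negz 0))], [::], RTL LE2 (Negz 1) (Posz 0) (Posz 0), [::]);
  ([:: ((Negz 4), (Posz 1)); ((Negz 2), (Negz 3)); ((Negz 0), (Posz 6)); ((Posz 1), (Negz 3)); ((Posz 3), (Posz 1))], [::], RN 10, [:: LF1; LT (Negz 0) (Negz 0) (Posz 0)]);
  ([:: ((Negz 1), (Posz 1)); ((Posz 0), (Negz 2)); ((Posz 2), (Posz 3)); ((Posz 4), (Negz 0))], [::], RN 0, [:: LT (Negz 0) (Negz 0) (Posz 0); LE2]);
  ([:: ((Negz 1), (Negz 0)); ((Posz 0), (Posz 2)); ((Posz 2), (Negz 0))], [::], RTL LE2 (Posz 0) (Negz 1) (Posz 0), [::]);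
  ([:: ((Negz 3), (Negz 0)); ((Negz 1), (Posz 4)); ((Posz 0), (Negz 5)); ((Posz 2), (Posz 4)); ((Posz 4), (Negz 0))], [:: LE2], RTT (Negz 0) (Posz 1) (Posz 0) (Negz 0) (Negz 0) (Posz 0), [::]);
  ([:: ((Negz 3), (Posz 1)); ((Negz 1), (Negz 3)); ((Posz 0), (Posz 6)); ((Posz 2), (Negz 3)); ((Posz 4), (Posz 1))], [:: LE1], RN 3, [:: LT (Negz 0) (Negz 0) (Posz 0)]);
  ([:: ((Negz 3), (Negz 0)); ((Negz 1), (Posz 4)); ((Posz 0), (Negz 5)); ((Posz 2), (Posz 4)); ((Posz 4), (Negz 0))], [::], RN 16, [:: LT (Negz 0) (Negz 0) (Posz 0)]);
  ([:: ((Negz 2), (Negz 0)); ((Negz 0), (Posz 4)); ((Posz 1), (Negz 5)); ((Posz 3), (Posz 4)); ((Posz 5), (Negz 0))], [:: LF1; LE1], RTL LE2 (Negz 0) (Negz 0) (Posz 0), [::]);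
  ([:: ((Negz 1), (Posz 1)); ((Posz 0), (Negz 2)); ((Posz 2), (Posz 3)); ((Posz 4), (Negz 0))], [::], RTT (Posz 1) (Negz 0) (Posz 0) (Negz 0) (Negz 0) (Posz 0), [:: LE2]);
  ([:: ((Negz 1), (Negz 0)); ((Posz 0), (Posz 3)); ((Posz 2), (Negz 2)); ((Posz 4), (Posz 1))], [::], RTT (Negz 0) (Posz 1) (Posz 0) (Negz 0) (Negz 0) (Posz 0), [:: LE2]);
  ([:: ((Negz 2), (Negz 0)); ((Negz 0), (Posz 3)); ((Posz 1), (Negz 2)); ((Posz 3), (Posz 1))], [::], RN 0, [:: LE2; LT (Negz 0) (Negz 0) (Posz 0)]);
  ([:: ((Negz 3), (Posz 1)); ((Negz 1), (Negz 3)); ((Posz 0), (Posz 6)); ((Posz 2), (Negz 3)); ((Posz 4), (Posz 1))], [:: LE2], RTT (Negz 0) (Posz 1) (Posz 0) (Negz 0) (Negz 0) (Posz 0), [::]);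
  ([:: ((Negz 1), (Posz 1)); ((Posz 0), (Negz 2)); ((Posz 2), (Posz 3)); ((Posz 4), (Negz 0))], [::], RTL LE2 (Posz 0) (Negz 1) (Posz 0), [::]);
  ([:: ((Negz 1), (Negz 0)); ((Posz 0), (Posz 3)); ((Posz 2), (Negz 2)); ((Posz 4), (Posz 1))], [::], RTL LE2 (Negz 1) (Posz 0) (Posz 0), [::]);
  ([:: ((Negz 2), (Negz 0)); ((Negz 0), (Posz 3)); ((Posz 1), (Negz 2)); ((Posz 3), (Posz 1))], [::], RTL LE2 (Posz 1) (Negz 0) (Posz 0), [:: LT (Negz 0) (Negz 0) (Posz 0)]);
  ([:: ((Negz 2), (Posz 1)); ((Negz 0), (Negz 2)); ((Posz 1), (Posz 3)); ((Posz 3), (Negz 0))], [::], RTL LE2 (Negz 0) (Posz 1) (Posz 0), [:: LT (Negz 0) (Negz 0) (Posz 0)]);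
  ([:: ((Negz 3), (Negz 0)); ((Negz 1), (Posz 3)); ((Posz 0), (Negz 2)); ((Posz 2), (Posz 1))], [:: LE2], RTT (Posz 1) (Negz 0) (Posz 0) (Negz 0) (Negz 0) (Posz 0), [::]);
  ([:: ((Negz 1), (Posz 1)); ((Posz 0), (Negz 2)); ((Posz 2), (Posz 3)); ((Posz 4), (Negz 0))], [:: LE2], RTT (Negz 0) (Posz 1) (Posz 0) (Negz 0) (Negz 0) (Posz 0), [::])] : seq certterm).
case: n Hn => [|n] Hn /=; first refl_close qp g sound 1%N ([:: ([:: ((Negz 4), (Posz 1)); ((Negz 2), (Negz 4)); ((Negz 0), (Posz 10)); ((Posz 1), (Negz 9)); ((Posz 3), (Posz 5)); ((Posz 5), (Negz 0))], [::], RN 16, [:: LT (Negz 0) (Negz 0) (Posz 0); LE1; LF1; LT (Negz 0) (Negz 0) (Posz 0)]);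
  ([:: ((Negz 1), (Posz 1)); ((Posz 0), (Negz 2)); ((Posz 2), (Posz 3)); ((Posz 4), (Negz 0))], [::], RN 16, [:: LT (Negz 0) (Negz 0) (Posz 0); LT (Negz 1) (Posz 0) (Posz 0)]);
  ([:: ((Negz 3), (Posz 1)); ((Negz 1), (Negz 2)); ((Posz 0), (Posz 3)); ((Posz 2), (Negz 0))], [::], RN 16, [:: LT (Negz 0) (Negz 0) (Posz 0); LT (Posz 0) (Negz 1) (Posz 0)]);
  ([:: ((Negz 2), (Negz 0)); ((Negz 0), (Posz 4)); ((Posz 1), (Negz 5)); ((Posz 3), (Posz 4)); ((Posz 5), (Negz 0))], [::], RTL LE2 (Negz 1) (Posz 0) (Posz 0), [:: LE1; LF1; LT (Negz 0) (Negz 0) (Posz 0)]);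
  ([:: ((Posz 0), (Negz 0)); ((Posz 2), (Posz 2)); ((Posz 4), (Negz 0))], [::], RTL LE2 (Negz 1) (Posz 0) (Posz 0), [:: LT (Negz 1) (Posz 0) (Posz 0)]);
  ([:: ((Negz 1), (Negz 0)); ((Posz 0), (Posz 2)); ((Posz 2), (Negz 0))], [::], RTL LE2 (Negz 1) (Posz 0) (Posz 0), [:: LT (Posz 0) (Negz 1) (Posz 0)]);
  ([:: ((Negz 3), (Negz 0)); ((Negz 1), (Posz 1)); ((Posz 0), (Posz 1)); ((Posz 2), (Negz 0))], [:: LE2], RTT (Negz 1) (Posz 0) (Posz 0) (Posz 0) (Negz 1) (Posz 0), [::]);
  ([:: ((Posz 0), (Posz 1)); ((Posz 2), (Negz 1)); ((Posz 4), (Posz 1))], [::], RTT (Negz 1) (Posz 0) (Posz 0) (Posz 0) (Negz 1) (Posz 0), [:: LE2]);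
  ([:: ((Negz 3), (Posz 1)); ((Negz 1), (Negz 3)); ((Posz 0), (Posz 6)); ((Posz 2), (Negz 3)); ((Posz 4), (Posz 1))], [::], RN 0, [:: LT (Negz 0) (Negz 0) (Posz 0); LE3; LF1; LT (Negz 0) (Negz 0) (Posz 0)]);
  ([:: ((Negz 1), (Negz 0)); ((Posz 0), (Posz 3)); ((Posz 2), (Negz 2)); ((Posz 4), (Posz 1))], [::], RN 0, [:: LT (Negz 0) (Negz 0) (Posz 0); LT (Negz 1) (Posz 0) (Posz 0); LE2]);
  ([:: ((Negz 1), (Negz 0)); ((Posz 0), (Posz 3)); ((Posz 2), (Negz 2)); ((Posz 4), (Posz 1))], [::], RTL LE3 (Negz 1) (Posz 0) (Posz 0), [:: LF1; LT (Negz 0) (Negz 0) (Posz 0)]);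
  ([:: ((Posz 0), (Posz 1)); ((Posz 2), (Negz 1)); ((Posz 4), (Posz 1))], [::], RTT (Negz 1) (Posz 0) (Posz 0) (Negz 1) (Posz 0) (Posz 0), [:: LE2]);
  ([:: ((Negz 3), (Negz 0)); ((Negz 1), (Posz 3)); ((Posz 0), (Negz 2)); ((Posz 2), (Posz 1))], [::], RTL LE3 (Posz 0) (Negz 1) (Posz 0), [:: LF1; LT (Negz 0) (Negz 0) (Posz 0)]);
  ([:: ((Negz 1), (Posz 1)); ((Posz 0), (Negz 1)); ((Posz 2), (Posz 1))], [::], RTT (Posz 0) (Negz 1) (Posz 0) (Negz 1) (Posz 0) (Posz 0), [:: LE2]);
  ([:: ((Negz 4), (Posz 1)); ((Negz 2), (Negz 4)); ((Negz 0), (Posz 10)); ((Posz 1), (Negz 9)); ((Posz 3), (Posz 5)); ((Posz 5), (Negz 0))], [:: LF1; LE3], RTL LE1 (Negz 0) (Negz 0) (Posz 0), [:: LF1; LT (Negz 0) (Negz 0) (Posz 0)]);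
  ([:: ((Negz 4), (Negz 0)); ((Negz 2), (Posz 5)); ((Negz 0), (Negz 9)); ((Posz 1), (Posz 10)); ((Posz 3), (Negz 4)); ((Posz 5), (Posz 1))], [:: LE2], RTT (Negz 0) (Posz 1) (Posz 0) (Negz 0) (Negz 0) (Posz 0), [:: LE1; LF1; LT (Negz 0) (Negz 0) (Posz 0)]);
  ([:: ((Negz 1), (Posz 1)); ((Posz 0), (Negz 2)); ((Posz 2), (Posz 3)); ((Posz 4), (Negz 0))], [:: LF1; LE3], RTT (Negz 0) (Negz 0) (Posz 0) (Negz 1) (Posz 0) (Posz 0), [::]);
  ([:: ((Negz 1), (Negz 0)); ((Posz 0), (Posz 3)); ((Posz 2), (Negz 2)); ((Posz 4), (Posz 1))], [:: LE2], RTT (Negz 0) (Posz 1) (Posz 0) (Negz 0) (Negz 0) (Posz 0), [:: LT (Negz 1) (Posz 0) (Posz 0)]);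
  ([:: ((Negz 3), (Posz 1)); ((Negz 1), (Negz 2)); ((Posz 0), (Posz 3)); ((Posz 2), (Negz 0))], [:: LF1; LE3], RTT (Negz 0) (Negz 0) (Posz 0) (Posz 0) (Negz 1) (Posz 0), [::]);
  ([:: ((Negz 3), (Negz 0)); ((Negz 1), (Posz 3)); ((Posz 0), (Negz 2)); ((Posz 2), (Posz 1))], [:: LE2], RTT (Negz 0) (Posz 1) (Posz 0) (Negz 0) (Negz 0) (Posz 0), [:: LT (Posz 0) (Negz 1) (Posz 0)]);
  ([:: ((Negz 4), (Negz 0)); ((Negz 2), (Posz 4)); ((Negz 0), (Negz 5)); ((Posz 1), (Posz 4)); ((Posz 3), (Negz 0))], [:: LE2], RTL LE1 (Negz 1) (Posz 0) (Posz 0), [:: LF1; LT (Negz 0) (Negz 0) (Posz 0)]);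
  ([:: ((Negz 1), (Negz 0)); ((Posz 0), (Posz 2)); ((Posz 2), (Negz 0))], [:: LE2], RTT (Negz 1) (Posz 0) (Posz 0) (Negz 1) (Posz 0) (Posz 0), [::]);
  ([:: ((Negz 1), (Posz 1)); ((Posz 0), (Negz 0)); ((Posz 2), (Negz 0)); ((Posz 4), (Posz 1))], [::], RTL LE2 (Negz 1) (Negz 1) (Posz 0), [::]);
  ([:: ((Negz 4), (Negz 0)); ((Negz 2), (Posz 5)); ((Negz 0), (Negz 9)); ((Posz 1), (Posz 10)); ((Posz 3), (Negz 4)); ((Posz 5), (Posz 1))], [:: LF1; LE1], RTL LE3 (Negz 0) (Negz 0) (Posz 0), [:: LF1; LT (Negz 0) (Negz 0) (Posz 0)]);
  ([:: ((Negz 3), (Posz 1)); ((Negz 1), (Negz 3)); ((Posz 0), (Posz 6)); ((Posz 2), (Negz 3)); ((Posz 4), (Posz 1))], [::], RTT (Posz 1) (Negz 0) (Posz 0) (Negz 0) (Negz 0) (Posz 0), [:: LE3; LF1; LT (Negz 0) (Negz 0) (Posz 0)]);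
  ([:: ((Negz 3), (Negz 0)); ((Negz 1), (Posz 4)); ((Posz 0), (Negz 5)); ((Posz 2), (Posz 4)); ((Posz 4), (Negz 0))], [::], RTT (Negz 0) (Posz 1) (Posz 0) (Negz 0) (Negz 0) (Posz 0), [:: LE3; LF1; LT (Negz 0) (Negz 0) (Posz 0)]);
  ([:: ((Negz 2), (Posz 1)); ((Negz 0), (Negz 3)); ((Posz 1), (Posz 6)); ((Posz 3), (Negz 3)); ((Posz 5), (Posz 1))], [:: LF1; LE1], RTT (Negz 0) (Negz 0) (Posz 0) (Negz 1) (Posz 0) (Posz 0), [:: LE2]);
  ([:: ((Negz 1), (Negz 0)); ((Posz 0), (Posz 3)); ((Posz 2), (Negz 2)); ((Posz 4), (Posz 1))], [::], RTT (Posz 1) (Negz 0) (Posz 0) (Negz 0) (Negz 0) (Posz 0), [:: LT (Negz 1) (Posz 0) (Posz 0); LE2]);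
  ([:: ((Negz 1), (Posz 1)); ((Posz 0), (Negz 2)); ((Posz 2), (Posz 3)); ((Posz 4), (Negz 0))], [::], RTT (Negz 0) (Posz 1) (Posz 0) (Negz 0) (Negz 0) (Posz 0), [:: LT (Negz 1) (Posz 0) (Posz 0); LE2]);
  ([:: ((Negz 3), (Negz 0)); ((Negz 1), (Posz 3)); ((Posz 0), (Negz 2)); ((Posz 2), (Posz 1))], [:: LE3], RTL LF1 (Negz 1) (Posz 0) (Posz 0), [:: LT (Negz 0) (Negz 0) (Posz 0)]);
  ([:: ((Posz 0), (Posz 1)); ((Posz 2), (Negz 1)); ((Posz 4), (Posz 1))], [::], RTL LE2 (Negz 3) (Posz 0) (Posz 0), [::]);
  ([:: ((Negz 3), (Negz 0)); ((Negz 1), (Posz 3)); ((Posz 0), (Negz 2)); ((Posz 2), (Posz 1))], [:: LE3], RTL LF1 (Posz 0) (Negz 1) (Posz 0), [:: LT (Negz 0) (Negz 0) (Posz 0)]);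
  ([:: ((Negz 4), (Posz 1)); ((Negz 2), (Negz 4)); ((Negz 0), (Posz 10)); ((Posz 1), (Negz 9)); ((Posz 3), (Posz 5)); ((Posz 5), (Negz 0))], [:: LF1], RN 11, [:: LT (Negz 0) (Negz 0) (Posz 0); LF1; LT (Negz 0) (Negz 0) (Posz 0)]);
  ([:: ((Negz 3), (Negz 0)); ((Negz 1), (Posz 3)); ((Posz 0), (Negz 2)); ((Posz 2), (Posz 1))], [:: LE2], RTT (Negz 1) (Posz 0) (Posz 0) (Posz 0) (Negz 1) (Posz 0), [::]);
  ([:: ((Negz 6), (Negz 0)); ((Negz 4), (Posz 4)); ((Negz 2), (Negz 5)); ((Negz 0), (Posz 4)); ((Posz 1), (Negz 0))], [::], RN 10, [:: LT (Negz 1) (Posz 0) (Posz 0); LF1; LT (Negz 0) (Negz 0) (Posz 0)]);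
  ([:: ((Negz 3), (Posz 1)); ((Negz 1), (Negz 3)); ((Posz 0), (Posz 6)); ((Posz 2), (Negz 3)); ((Posz 4), (Posz 1))], [::], RTL LE3 (Posz 0) (Negz 1) (Posz 0), [:: LF1; LT (Negz 0) (Negz 0) (Posz 0)]);
  ([:: ((Negz 3), (Negz 0)); ((Negz 1), (Posz 4)); ((Posz 0), (Negz 5)); ((Posz 2), (Posz 4)); ((Posz 4), (Negz 0))], [::], RTL LE3 (Negz 1) (Posz 0) (Posz 0), [:: LF1; LT (Negz 0) (Negz 0) (Posz 0)]);
  ([:: ((Negz 2), (Posz 1)); ((Negz 0), (Negz 3)); ((Posz 1), (Posz 6)); ((Posz 3), (Negz 3)); ((Posz 5), (Posz 1))], [:: LF1; LE1], RTL LE2 (Negz 2) (Negz 0) (Posz 0), [::]);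
  ([:: ((Negz 1), (Negz 0)); ((Posz 0), (Posz 3)); ((Posz 2), (Negz 2)); ((Posz 4), (Posz 1))], [::], RTT (Posz 0) (Negz 1) (Posz 0) (Negz 1) (Posz 0) (Posz 0), [:: LE2]);
  ([:: ((Negz 1), (Posz 1)); ((Posz 0), (Negz 2)); ((Posz 2), (Posz 3)); ((Posz 4), (Negz 0))], [::], RTT (Negz 1) (Posz 0) (Posz 0) (Negz 1) (Posz 0) (Posz 0), [:: LE2]);
  ([:: ((Negz 1), (Negz 0)); ((Posz 0), (Posz 3)); ((Posz 2), (Negz 2)); ((Posz 4), (Posz 1))], [::], RN 16, [:: LT (Negz 1) (Posz 0) (Posz 0); LT (Negz 0) (Negz 0) (Posz 0)]);
  ([:: ((Negz 5), (Negz 0)); ((Negz 3), (Posz 3)); ((Negz 1), (Negz 2)); ((Posz 0), (Posz 1))], [::], RN 16, [:: LT (Posz 0) (Negz 1) (Posz 0); LT (Negz 0) (Negz 0) (Posz 0)]);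
  ([:: ((Negz 5), (Negz 0)); ((Negz 3), (Posz 4)); ((Negz 1), (Negz 5)); ((Posz 0), (Posz 4)); ((Posz 2), (Negz 0))], [:: LE1; LE2], RTL LF1 (Negz 1) (Posz 0) (Posz 0), [:: LT (Negz 0) (Negz 0) (Posz 0)]);
  ([:: ((Negz 3), (Posz 1)); ((Negz 1), (Negz 3)); ((Posz 0), (Posz 6)); ((Posz 2), (Negz 3)); ((Posz 4), (Posz 1))], [:: LE3], RTL LF1 (Posz 0) (Negz 1) (Posz 0), [:: LT (Negz 0) (Negz 0) (Posz 0)]);
  ([:: ((Negz 1), (Negz 0)); ((Posz 0), (Posz 3)); ((Posz 2), (Negz 2)); ((Posz 4), (Posz 1))], [::], RTL LE2 (Negz 1) (Negz 1) (Posz 0), [::]);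
  ([:: ((Negz 1), (Posz 1)); ((Posz 0), (Negz 2)); ((Posz 2), (Posz 3)); ((Posz 4), (Negz 0))], [::], RTL LE2 (Negz 3) (Posz 0) (Posz 0), [::]);
  ([:: ((Negz 1), (Negz 0)); ((Posz 0), (Posz 3)); ((Posz 2), (Negz 2)); ((Posz 4), (Posz 1))], [:: LF1; LE3], RTT (Negz 1) (Posz 0) (Posz 0) (Negz 0) (Negz 0) (Posz 0), [::]);
  ([:: ((Negz 1), (Posz 1)); ((Posz 0), (Negz 2)); ((Posz 2), (Posz 3)); ((Posz 4), (Negz 0))], [:: LE2], RTT (Negz 0) (Posz 1) (Posz 0) (Negz 1) (Posz 0) (Posz 0), [:: LT (Negz 0) (Negz 0) (Posz 0)]);
  ([:: ((Negz 5), (Negz 0)); ((Negz 3), (Posz 3)); ((Negz 1), (Negz 2)); ((Posz 0), (Posz 1))], [:: LF1; LE3], RTT (Posz 0) (Negz 1) (Posz 0) (Negz 0) (Negz 0) (Posz 0), [::]);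
  ([:: ((Negz 5), (Posz 1)); ((Negz 3), (Negz 2)); ((Negz 1), (Posz 3)); ((Posz 0), (Negz 0))], [:: LE2], RTT (Negz 0) (Posz 1) (Posz 0) (Posz 0) (Negz 1) (Posz 0), [:: LT (Negz 0) (Negz 0) (Posz 0)]);
  ([:: ((Negz 3), (Negz 0)); ((Negz 1), (Posz 4)); ((Posz 0), (Negz 5)); ((Posz 2), (Posz 4)); ((Posz 4), (Negz 0))], [:: LE1], RN 3, [:: LT (Negz 1) (Posz 0) (Posz 0); LT (Negz 0) (Negz 0) (Posz 0)]);
  ([:: ((Negz 5), (Posz 1)); ((Negz 3), (Negz 3)); ((Negz 1), (Posz 6)); ((Posz 0), (Negz 3)); ((Posz 2), (Posz 1))], [::], RN 16, [:: LT (Posz 0) (Negz 1) (Posz 0); LT (Negz 0) (Negz 0) (Posz 0)]);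
  ([:: ((Negz 1), (Posz 1)); ((Posz 0), (Negz 2)); ((Posz 2), (Posz 3)); ((Posz 4), (Negz 0))], [:: LE2], RTT (Negz 2) (Posz 1) (Posz 0) (Negz 0) (Negz 0) (Posz 0), [::]);
  ([:: ((Negz 5), (Posz 1)); ((Negz 3), (Negz 2)); ((Negz 1), (Posz 3)); ((Posz 0), (Negz 0))], [:: LE2], RTT (Negz 0) (Negz 0) (Posz 0) (Negz 0) (Negz 0) (Posz 0), [::]);
  ([:: ((Negz 2), (Posz 1)); ((Negz 0), (Negz 2)); ((Posz 1), (Posz 3)); ((Posz 3), (Negz 0))], [::], RN 0, [:: LE2; LT (Negz 1) (Posz 0) (Posz 0); LT (Negz 0) (Negz 0) (Posz 0)]);
  ([:: ((Negz 5), (Posz 1)); ((Negz 3), (Negz 3)); ((Negz 1), (Posz 6)); ((Posz 0), (Negz 3)); ((Posz 2), (Posz 1))], [:: LF1; LE3], RTT (Posz 0) (Negz 1) (Posz 0) (Negz 0) (Negz 0) (Posz 0), [::]);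
  ([:: ((Negz 5), (Negz 0)); ((Negz 3), (Posz 4)); ((Negz 1), (Negz 5)); ((Posz 0), (Posz 4)); ((Posz 2), (Negz 0))], [:: LE2], RTT (Negz 0) (Posz 1) (Posz 0) (Posz 0) (Negz 1) (Posz 0), [:: LT (Negz 0) (Negz 0) (Posz 0)]);
  ([:: ((Negz 3), (Negz 0)); ((Negz 1), (Posz 4)); ((Posz 0), (Negz 5)); ((Posz 2), (Posz 4)); ((Posz 4), (Negz 0))], [:: LF1; LE1; LE2], RTT (Negz 1) (Posz 0) (Posz 0) (Negz 0) (Negz 0) (Posz 0), [::]);
  ([:: ((Negz 2), (Posz 1)); ((Negz 0), (Negz 2)); ((Posz 1), (Posz 3)); ((Posz 3), (Negz 0))], [::], RTL LE2 (Posz 1) (Negz 0) (Posz 0), [:: LT (Negz 1) (Posz 0) (Posz 0); LT (Negz 0) (Negz 0) (Posz 0)]);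
  ([:: ((Negz 2), (Negz 0)); ((Negz 0), (Posz 3)); ((Posz 1), (Negz 2)); ((Posz 3), (Posz 1))], [::], RTL LE2 (Negz 0) (Posz 1) (Posz 0), [:: LT (Negz 1) (Posz 0) (Posz 0); LT (Negz 0) (Negz 0) (Posz 0)]);
  ([:: ((Negz 5), (Negz 0)); ((Negz 3), (Posz 4)); ((Negz 1), (Negz 5)); ((Posz 0), (Posz 4)); ((Posz 2), (Negz 0))], [:: LE2], RTT (Negz 0) (Negz 0) (Posz 0) (Negz 0) (Negz 0) (Posz 0), [::]);
  ([:: ((Negz 3), (Posz 1)); ((Negz 1), (Negz 2)); ((Posz 0), (Posz 3)); ((Posz 2), (Negz 0))], [:: LE2], RTT (Posz 1) (Negz 0) (Posz 0) (Negz 1) (Posz 0) (Posz 0), [:: LT (Negz 0) (Negz 0) (Posz 0)]);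
  ([:: ((Negz 1), (Negz 0)); ((Posz 0), (Posz 3)); ((Posz 2), (Negz 2)); ((Posz 4), (Posz 1))], [:: LE2], RTT (Negz 0) (Posz 1) (Posz 0) (Negz 1) (Posz 0) (Posz 0), [:: LT (Negz 0) (Negz 0) (Posz 0)]);
  ([:: ((Negz 3), (Posz 1)); ((Negz 1), (Negz 2)); ((Posz 0), (Posz 3)); ((Posz 2), (Negz 0))], [:: LE2], RTT (Negz 0) (Negz 0) (Posz 0) (Negz 0) (Negz 0) (Posz 0), [::]);
  ([:: ((Negz 1), (Negz 0)); ((Posz 0), (Posz 3)); ((Posz 2), (Negz 2)); ((Posz 4), (Posz 1))], [:: LE2], RTT (Negz 2) (Posz 1) (Posz 0) (Negz 0) (Negz 0) (Posz 0), [::])] : seq certterm).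
case: n Hn => [|n] Hn /=; first refl_close qp g sound 0%N ([:: ([:: ((Negz 2), (Posz 1)); ((Negz 0), (Negz 1)); ((Posz 1), (Posz 1))], [::], RN 16, [:: LT (Negz 0) (Negz 0) (Posz 0); LT (Negz 1) (Posz 0) (Posz 0); LT (Posz 0) (Negz 1) (Posz 0)]);
  ([:: ((Negz 0), (Negz 0)); ((Posz 1), (Posz 1))], [::], RTL LE2 (Negz 1) (Posz 0) (Posz 0), [:: LT (Negz 1) (Posz 0) (Posz 0); LT (Posz 0) (Negz 1) (Posz 0)]);
  ([:: ((Negz 0), (Negz 0)); ((Posz 1), (Posz 2)); ((Posz 3), (Negz 0))], [::], RTT (Negz 1) (Posz 0) (Posz 0) (Posz 0) (Negz 1) (Posz 0), [:: LE3; LF1; LT (Negz 0) (Negz 0) (Posz 0)]);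
  ([:: ((Posz 1), (Posz 1)); ((Posz 3), (Negz 0))], [::], RTT (Negz 1) (Posz 0) (Posz 0) (Posz 0) (Negz 1) (Posz 0), [:: LT (Negz 1) (Posz 0) (Posz 0); LE2]);
  ([:: ((Negz 2), (Posz 1)); ((Negz 0), (Negz 1)); ((Posz 1), (Posz 1))], [:: LF1; LE3], RTT (Negz 0) (Negz 0) (Posz 0) (Negz 1) (Posz 0) (Posz 0), [:: LT (Posz 0) (Negz 1) (Posz 0)]);
  ([:: ((Negz 2), (Negz 0)); ((Negz 0), (Posz 2)); ((Posz 1), (Negz 0))], [:: LE2], RTT (Negz 0) (Posz 1) (Posz 0) (Negz 0) (Negz 0) (Posz 0), [:: LT (Negz 1) (Posz 0) (Posz 0); LT (Posz 0) (Negz 1) (Posz 0)]);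
  ([:: ((Negz 2), (Negz 0)); ((Negz 0), (Posz 1))], [:: LE2], RTT (Negz 1) (Posz 0) (Posz 0) (Negz 1) (Posz 0) (Posz 0), [:: LT (Posz 0) (Negz 1) (Posz 0)]);
  ([:: ((Negz 0), (Negz 0)); ((Posz 1), (Posz 2)); ((Posz 3), (Negz 0))], [::], RTL LE3 (Negz 1) (Negz 1) (Posz 0), [:: LF1; LT (Negz 0) (Negz 0) (Posz 0)]);
  ([:: ((Posz 1), (Posz 1)); ((Posz 3), (Negz 0))], [::], RTT (Negz 1) (Negz 1) (Posz 0) (Negz 1) (Posz 0) (Posz 0), [:: LE2]);
  ([:: ((Negz 2), (Posz 1)); ((Negz 0), (Negz 1)); ((Posz 1), (Posz 1))], [:: LF1; LE3], RTT (Negz 2) (Negz 0) (Posz 0) (Posz 0) (Negz 1) (Posz 0), [::]);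
  ([:: ((Negz 2), (Negz 0)); ((Negz 0), (Posz 1))], [:: LE2], RTT (Negz 3) (Posz 0) (Posz 0) (Posz 0) (Negz 1) (Posz 0), [::]);
  ([:: ((Negz 2), (Negz 0)); ((Negz 0), (Posz 2)); ((Posz 1), (Negz 0))], [:: LE3], RTL LF1 (Negz 1) (Negz 1) (Posz 0), [:: LT (Negz 0) (Negz 0) (Posz 0)]);
  ([:: ((Posz 1), (Posz 1)); ((Posz 3), (Negz 0))], [::], RTL LE2 (Negz 3) (Negz 1) (Posz 0), [::]);
  ([:: ((Negz 2), (Negz 0)); ((Negz 0), (Posz 2)); ((Posz 1), (Negz 0))], [::], RN 16, [:: LT (Negz 1) (Negz 1) (Posz 0); LT (Negz 0) (Negz 0) (Posz 0)]);
  ([:: ((Negz 2), (Negz 0)); ((Negz 0), (Posz 2)); ((Posz 1), (Negz 0))], [:: LF1; LE3], RTT (Negz 1) (Negz 1) (Posz 0) (Negz 0) (Negz 0) (Posz 0), [::]);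
  ([:: ((Negz 2), (Posz 1)); ((Negz 0), (Negz 1)); ((Posz 1), (Posz 1))], [:: LE2], RTT (Negz 0) (Posz 1) (Posz 0) (Negz 1) (Negz 1) (Posz 0), [:: LT (Negz 0) (Negz 0) (Posz 0)]);
  ([:: ((Negz 2), (Posz 1)); ((Negz 0), (Negz 1)); ((Posz 1), (Posz 1))], [:: LE2], RTT (Negz 2) (Negz 0) (Posz 0) (Negz 0) (Negz 0) (Posz 0), [::])] : seq certterm).
by [].
Qed.

Lemma LII : padd (pmul Pz Ez) (pmul (psubst (qp 2) Vz) Uz) = pmul a G2.
Proof.
tops; rewrite /C1 /C2 /C3; apply: ps_ext => n /=.
case: n => [|n] Hn /=; first refl_close qp g sound 1%N ([:: ([:: ((Posz 1), (Posz 1)); ((Posz 3), (Negz 1)); ((Posz 5), (Posz 1))], [::], RN 0, [:: LT (Negz 0) (Negz 0) (Posz 0)]);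
  ([:: ((Negz 2), (Negz 0)); ((Negz 0), (Posz 4)); ((Posz 1), (Negz 5)); ((Posz 3), (Posz 4)); ((Posz 5), (Negz 0))], [::], RN 10, [:: LF3; LT (Negz 0) (Posz 0) (Negz 0)]);
  ([:: ((Negz 0), (Posz 1)); ((Posz 1), (Negz 1)); ((Posz 3), (Posz 1))], [::], RN 1, [:: LT (Posz 0) (Negz 0) (Negz 0)]);
  ([:: ((Posz 1), (Posz 1)); ((Posz 3), (Negz 1)); ((Posz 5), (Posz 1))], [::], RN 20, [:: LT (Negz 0) (Posz 0) (Negz 0)]);
  ([:: ((Posz 1), (Posz 1)); ((Posz 3), (Negz 1)); ((Posz 5), (Posz 1))], [::], RTT (Posz 1) (Negz 0) (Posz 0) (Negz 0) (Negz 0) (Posz 0), [::]);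
  ([:: ((Posz 1), (Negz 0)); ((Posz 3), (Posz 2)); ((Posz 5), (Negz 0))], [::], RTT (Negz 0) (Posz 1) (Posz 0) (Negz 0) (Negz 0) (Posz 0), [::]);
  ([:: ((Negz 1), (Negz 0)); ((Posz 0), (Posz 4)); ((Posz 2), (Negz 5)); ((Posz 4), (Posz 4)); ((Posz 6), (Negz 0))], [:: LE1], RN 19, [:: LT (Negz 0) (Posz 0) (Negz 0)]);
  ([:: ((Negz 0), (Posz 1)); ((Posz 1), (Negz 1)); ((Posz 3), (Posz 1))], [::], RTT (Posz 0) (Posz 1) (Negz 0) (Posz 0) (Negz 0) (Negz 0), [::]);
  ([:: ((Negz 0), (Negz 0)); ((Posz 1), (Posz 2)); ((Posz 3), (Negz 0))], [::], RTT (Posz 0) (Negz 0) (Posz 1) (Posz 0) (Negz 0) (Negz 0), [::]);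
  ([:: ((Posz 1), (Posz 1)); ((Posz 3), (Negz 1)); ((Posz 5), (Posz 1))], [::], RTT (Posz 1) (Posz 0) (Negz 0) (Negz 0) (Posz 0) (Negz 0), [::]);
  ([:: ((Posz 1), (Negz 0)); ((Posz 3), (Posz 2)); ((Posz 5), (Negz 0))], [::], RTT (Negz 0) (Posz 0) (Posz 1) (Negz 0) (Posz 0) (Negz 0), [::]);
  ([:: ((Negz 1), (Negz 0)); ((Posz 0), (Posz 4)); ((Posz 2), (Negz 5)); ((Posz 4), (Posz 4)); ((Posz 6), (Negz 0))], [::], RN 18, [:: LE2; LT (Negz 0) (Posz 0) (Negz 0)]);
  ([:: ((Negz 0), (Posz 1)); ((Posz 1), (Negz 2)); ((Posz 3), (Posz 3)); ((Posz 5), (Negz 0))], [::], RN 0, [:: LT (Posz 0) (Negz 0) (Posz 1); LT (Negz 0) (Posz 0) (Negz 0)]);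
  ([:: ((Negz 0), (Posz 1)); ((Posz 1), (Negz 3)); ((Posz 3), (Posz 6)); ((Posz 5), (Negz 3)); ((Posz 7), (Posz 1))], [:: LF2], RTL LE2 (Posz 1) (Negz 0) (Posz 0), [:: LT (Negz 0) (Posz 0) (Negz 0)]);
  ([:: ((Negz 1), (Negz 0)); ((Posz 0), (Posz 4)); ((Posz 2), (Negz 5)); ((Posz 4), (Posz 4)); ((Posz 6), (Negz 0))], [:: LF1; LE1], RTT (Posz 0) (Negz 0) (Posz 1) (Negz 0) (Posz 0) (Negz 0), [::]);
  ([:: ((Negz 0), (Posz 1)); ((Posz 1), (Negz 2)); ((Posz 3), (Posz 3)); ((Posz 5), (Negz 0))], [::], RTT (Posz 1) (Negz 0) (Posz 0) (Posz 0) (Negz 0) (Posz 1), [:: LT (Negz 0) (Posz 0) (Negz 0)]);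
  ([:: ((Negz 0), (Negz 0)); ((Posz 1), (Posz 3)); ((Posz 3), (Negz 2)); ((Posz 5), (Posz 1))], [::], RTT (Negz 0) (Posz 1) (Posz 0) (Posz 0) (Negz 0) (Posz 1), [:: LT (Negz 0) (Posz 0) (Negz 0)]);
  ([:: ((Negz 1), (Posz 1)); ((Posz 0), (Negz 3)); ((Posz 2), (Posz 6)); ((Posz 4), (Negz 3)); ((Posz 6), (Posz 1))], [:: LF2; LE2], RTT (Posz 1) (Negz 0) (Posz 0) (Negz 0) (Posz 0) (Negz 0), [::]);
  ([:: ((Negz 0), (Posz 1)); ((Posz 1), (Negz 2)); ((Posz 3), (Posz 3)); ((Posz 5), (Negz 0))], [::], RTT (Posz 1) (Negz 1) (Posz 1) (Negz 0) (Posz 0) (Negz 0), [::]);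
  ([:: ((Negz 0), (Negz 0)); ((Posz 1), (Posz 3)); ((Posz 3), (Negz 2)); ((Posz 5), (Posz 1))], [::], RTT (Negz 0) (Posz 0) (Posz 1) (Negz 0) (Posz 0) (Negz 0), [::])] : seq certterm).
case: n Hn => [|n] Hn /=; first refl_close qp g sound 2%N ([:: ([:: ((Negz 2), (Posz 1)); ((Negz 0), (Negz 4)); ((Posz 1), (Posz 10)); ((Posz 3), (Negz 9)); ((Posz 5), (Posz 5)); ((Posz 7), (Negz 0))], [::], RTL LF3 (Negz 1) (Posz 0) (Posz 0), [:: LE1; LE2; LT (Negz 0) (Posz 0) (Negz 0)]);
  ([:: ((Negz 0), (Posz 1)); ((Posz 1), (Negz 3)); ((Posz 3), (Posz 6)); ((Posz 5), (Negz 3)); ((Posz 7), (Posz 1))], [::], RTL LF3 (Negz 1) (Posz 0) (Posz 0), [:: LE3; LT (Negz 0) (Posz 0) (Negz 0)]);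
  ([:: ((Negz 0), (Posz 1)); ((Posz 1), (Negz 3)); ((Posz 3), (Posz 6)); ((Posz 5), (Negz 3)); ((Posz 7), (Posz 1))], [::], RTL LF2 (Negz 1) (Posz 0) (Posz 0), [:: LE2; LT (Posz 0) (Negz 0) (Negz 0)]);
  ([:: ((Negz 2), (Posz 1)); ((Negz 0), (Negz 3)); ((Posz 1), (Posz 6)); ((Posz 3), (Negz 3)); ((Posz 5), (Posz 1))], [::], RTL LF1 (Negz 1) (Posz 0) (Posz 0), [:: LE1; LT (Negz 0) (Negz 0) (Posz 0)]);
  ([:: ((Negz 1), (Negz 0)); ((Posz 0), (Posz 1)); ((Posz 2), (Posz 2)); ((Posz 4), (Negz 2)); ((Posz 6), (Posz 1))], [::], RTT (Negz 1) (Posz 0) (Posz 0) (Posz 0) (Posz 0) (Negz 1), [::]);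
  ([:: ((Posz 2), (Negz 0)); ((Posz 4), (Posz 2)); ((Posz 6), (Negz 0))], [::], RTT (Negz 1) (Posz 0) (Posz 0) (Posz 0) (Negz 1) (Posz 0), [::]);
  ([:: ((Negz 1), (Posz 1)); ((Posz 0), (Negz 1)); ((Posz 4), (Posz 2)); ((Posz 6), (Negz 0))], [::], RTT (Negz 1) (Posz 0) (Posz 0) (Negz 1) (Posz 0) (Posz 0), [::]);
  ([:: ((Negz 0), (Negz 0)); ((Posz 1), (Posz 4)); ((Posz 3), (Negz 5)); ((Posz 5), (Posz 4)); ((Posz 7), (Negz 0))], [::], RTL LE1 (Negz 1) (Posz 0) (Posz 0), [:: LF1; LT (Negz 0) (Negz 0) (Posz 0)]);
  ([:: ((Negz 1), (Posz 1)); ((Posz 0), (Negz 2)); ((Posz 2), (Posz 3)); ((Posz 4), (Negz 0))], [::], RN 0, [:: LT (Negz 0) (Negz 0) (Posz 0); LT (Posz 0) (Posz 0) (Negz 1)]);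
  ([:: ((Negz 1), (Negz 0)); ((Posz 0), (Posz 2)); ((Posz 2), (Negz 0))], [::], RTT (Posz 0) (Negz 1) (Posz 0) (Posz 0) (Posz 0) (Negz 1), [::]);
  ([:: ((Negz 3), (Posz 1)); ((Negz 1), (Negz 5)); ((Posz 0), (Posz 15)); ((Posz 2), (Negz 19)); ((Posz 4), (Posz 15)); ((Posz 6), (Negz 5)); ((Posz 8), (Posz 1))], [::], RN 16, [:: LT (Negz 0) (Negz 0) (Posz 0); LE1; LF3; LT (Negz 0) (Posz 0) (Negz 0)]);
  ([:: ((Negz 2), (Posz 1)); ((Negz 0), (Negz 4)); ((Posz 1), (Posz 10)); ((Posz 3), (Negz 9)); ((Posz 5), (Posz 5)); ((Posz 7), (Negz 0))], [::], RN 16, [:: LT (Negz 0) (Negz 0) (Posz 0); LF2; LT (Posz 0) (Negz 0) (Negz 0)]);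
  ([:: ((Negz 1), (Negz 0)); ((Posz 0), (Posz 5)); ((Posz 2), (Negz 9)); ((Posz 4), (Posz 10)); ((Posz 6), (Negz 4)); ((Posz 8), (Posz 1))], [::], RTL LE2 (Negz 1) (Posz 0) (Posz 0), [:: LE1; LF3; LT (Negz 0) (Posz 0) (Negz 0)]);
  ([:: ((Negz 0), (Negz 0)); ((Posz 1), (Posz 4)); ((Posz 3), (Negz 5)); ((Posz 5), (Posz 4)); ((Posz 7), (Negz 0))], [::], RTL LE2 (Negz 1) (Posz 0) (Posz 0), [:: LF2; LT (Posz 0) (Negz 0) (Negz 0)]);
  ([:: ((Negz 2), (Negz 0)); ((Negz 0), (Posz 3)); ((Posz 1), (Negz 1)); ((Posz 3), (Negz 1)); ((Posz 5), (Posz 3)); ((Posz 7), (Negz 0))], [:: LE2], RTL LF2 (Negz 1) (Posz 0) (Posz 0), [:: LT (Posz 0) (Negz 0) (Negz 0)]);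
  ([:: ((Negz 2), (Posz 1)); ((Negz 0), (Negz 4)); ((Posz 1), (Posz 10)); ((Posz 3), (Negz 9)); ((Posz 5), (Posz 5)); ((Posz 7), (Negz 0))], [::], RN 0, [:: LT (Negz 0) (Negz 0) (Posz 0); LE3; LF3; LT (Negz 0) (Posz 0) (Negz 0)]);
  ([:: ((Negz 0), (Negz 0)); ((Posz 1), (Posz 4)); ((Posz 3), (Negz 5)); ((Posz 5), (Posz 4)); ((Posz 7), (Negz 0))], [::], RTL LE3 (Negz 1) (Posz 0) (Posz 0), [:: LF3; LT (Negz 0) (Posz 0) (Negz 0)]);
  ([:: ((Negz 2), (Negz 0)); ((Negz 0), (Posz 4)); ((Posz 1), (Negz 5)); ((Posz 3), (Posz 4)); ((Posz 5), (Negz 0))], [::], RTL LE3 (Posz 0) (Negz 1) (Posz 0), [:: LF3; LT (Negz 0) (Posz 0) (Negz 0)]);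
  ([:: ((Negz 0), (Posz 1)); ((Posz 1), (Negz 4)); ((Posz 3), (Posz 10)); ((Posz 5), (Negz 9)); ((Posz 7), (Posz 5)); ((Posz 9), (Negz 0))], [:: LF3], RTL LE1 (Negz 1) (Posz 0) (Posz 0), [:: LE2; LT (Negz 0) (Posz 0) (Negz 0)]);
  ([:: ((Posz 1), (Posz 1)); ((Posz 3), (Negz 3)); ((Posz 5), (Posz 6)); ((Posz 7), (Negz 3)); ((Posz 9), (Posz 1))], [:: LF3], RTL LE3 (Negz 1) (Posz 0) (Posz 0), [:: LT (Negz 0) (Posz 0) (Negz 0)]);
  ([:: ((Negz 0), (Posz 1)); ((Posz 1), (Negz 3)); ((Posz 3), (Posz 6)); ((Posz 5), (Negz 3)); ((Posz 7), (Posz 1))], [:: LF2], RTL LE2 (Negz 1) (Posz 0) (Posz 0), [:: LT (Posz 0) (Negz 0) (Negz 0)]);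
  ([:: ((Negz 0), (Posz 1)); ((Posz 1), (Negz 3)); ((Posz 3), (Posz 6)); ((Posz 5), (Negz 3)); ((Posz 7), (Posz 1))], [:: LF1], RTL LE1 (Negz 1) (Posz 0) (Posz 0), [:: LT (Negz 0) (Negz 0) (Posz 0)]);
  ([:: ((Negz 2), (Negz 0)); ((Negz 0), (Posz 4)); ((Posz 1), (Negz 5)); ((Posz 3), (Posz 4)); ((Posz 5), (Negz 0))], [:: LE1], RTL LF1 (Negz 1) (Posz 0) (Posz 0), [:: LT (Negz 0) (Negz 0) (Posz 0)]);
  ([:: ((Negz 2), (Negz 0)); ((Negz 0), (Posz 4)); ((Posz 1), (Negz 5)); ((Posz 3), (Posz 4)); ((Posz 5), (Negz 0))], [:: LF1; LE1], RTT (Negz 0) (Negz 0) (Posz 0) (Posz 0) (Posz 0) (Negz 1), [::]);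
  ([:: ((Negz 1), (Posz 1)); ((Posz 0), (Negz 2)); ((Posz 2), (Posz 3)); ((Posz 4), (Negz 0))], [::], RTT (Posz 1) (Negz 0) (Posz 0) (Negz 0) (Negz 0) (Posz 0), [:: LT (Posz 0) (Posz 0) (Negz 1)]);
  ([:: ((Negz 1), (Negz 0)); ((Posz 0), (Posz 3)); ((Posz 2), (Negz 2)); ((Posz 4), (Posz 1))], [::], RTT (Negz 0) (Posz 1) (Posz 0) (Negz 0) (Negz 0) (Posz 0), [:: LT (Posz 0) (Posz 0) (Negz 1)]);
  ([:: ((Negz 3), (Posz 1)); ((Negz 1), (Negz 5)); ((Posz 0), (Posz 15)); ((Posz 2), (Negz 19)); ((Posz 4), (Posz 15)); ((Posz 6), (Negz 5)); ((Posz 8), (Posz 1))], [:: LF1; LE3], RTL LE1 (Negz 0) (Negz 0) (Posz 0), [:: LF3; LT (Negz 0) (Posz 0) (Negz 0)]);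
  ([:: ((Negz 3), (Negz 0)); ((Negz 1), (Posz 6)); ((Posz 0), (Negz 14)); ((Posz 2), (Posz 20)); ((Posz 4), (Negz 14)); ((Posz 6), (Posz 6)); ((Posz 8), (Negz 0))], [:: LE2], RTT (Negz 0) (Posz 1) (Posz 0) (Negz 0) (Negz 0) (Posz 0), [:: LE1; LF3; LT (Negz 0) (Posz 0) (Negz 0)]);
  ([:: ((Negz 2), (Posz 1)); ((Negz 0), (Negz 4)); ((Posz 1), (Posz 10)); ((Posz 3), (Negz 9)); ((Posz 5), (Posz 5)); ((Posz 7), (Negz 0))], [:: LF1; LE3], RTL LF2 (Negz 0) (Negz 0) (Posz 0), [:: LT (Posz 0) (Negz 0) (Negz 0)]);
  ([:: ((Negz 2), (Negz 0)); ((Negz 0), (Posz 5)); ((Posz 1), (Negz 9)); ((Posz 3), (Posz 10)); ((Posz 5), (Negz 4)); ((Posz 7), (Posz 1))], [:: LE2], RTT (Negz 0) (Posz 1) (Posz 0) (Negz 0) (Negz 0) (Posz 0), [:: LF2; LT (Posz 0) (Negz 0) (Negz 0)]);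
  ([:: ((Negz 3), (Negz 0)); ((Negz 1), (Posz 5)); ((Posz 0), (Negz 9)); ((Posz 2), (Posz 10)); ((Posz 4), (Negz 4)); ((Posz 6), (Posz 1))], [:: LE2], RTL LE1 (Negz 1) (Posz 0) (Posz 0), [:: LF3; LT (Negz 0) (Posz 0) (Negz 0)]);
  ([:: ((Negz 1), (Posz 1)); ((Posz 0), (Negz 1)); ((Posz 4), (Posz 2)); ((Posz 6), (Negz 0))], [::], RN 1, [:: LT (Negz 1) (Posz 0) (Posz 0); LT (Posz 0) (Negz 0) (Negz 0)]);
  ([:: ((Negz 3), (Negz 0)); ((Negz 1), (Posz 6)); ((Posz 0), (Negz 14)); ((Posz 2), (Posz 20)); ((Posz 4), (Negz 14)); ((Posz 6), (Posz 6)); ((Posz 8), (Negz 0))], [:: LF1; LE1], RTL LE3 (Negz 0) (Negz 0) (Posz 0), [:: LF3; LT (Negz 0) (Posz 0) (Negz 0)]);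
  ([:: ((Negz 2), (Posz 1)); ((Negz 0), (Negz 4)); ((Posz 1), (Posz 10)); ((Posz 3), (Negz 9)); ((Posz 5), (Posz 5)); ((Posz 7), (Negz 0))], [::], RTT (Posz 1) (Negz 0) (Posz 0) (Negz 0) (Negz 0) (Posz 0), [:: LE3; LF3; LT (Negz 0) (Posz 0) (Negz 0)]);
  ([:: ((Negz 2), (Negz 0)); ((Negz 0), (Posz 5)); ((Posz 1), (Negz 9)); ((Posz 3), (Posz 10)); ((Posz 5), (Negz 4)); ((Posz 7), (Posz 1))], [::], RTT (Negz 0) (Posz 1) (Posz 0) (Negz 0) (Negz 0) (Posz 0), [:: LE3; LF3; LT (Negz 0) (Posz 0) (Negz 0)]);
  ([:: ((Negz 2), (Negz 0)); ((Negz 0), (Posz 4)); ((Posz 1), (Negz 5)); ((Posz 3), (Posz 4)); ((Posz 5), (Negz 0))], [:: LE3], RTL LF3 (Negz 1) (Posz 0) (Posz 0), [:: LT (Negz 0) (Posz 0) (Negz 0)]);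
  ([:: ((Negz 2), (Negz 0)); ((Negz 0), (Posz 4)); ((Posz 1), (Negz 5)); ((Posz 3), (Posz 4)); ((Posz 5), (Negz 0))], [:: LE3], RTL LF3 (Posz 0) (Negz 1) (Posz 0), [:: LT (Negz 0) (Posz 0) (Negz 0)]);
  ([:: ((Negz 2), (Posz 1)); ((Negz 0), (Negz 4)); ((Posz 1), (Posz 10)); ((Posz 3), (Negz 9)); ((Posz 5), (Posz 5)); ((Posz 7), (Negz 0))], [:: LF3; LE1], RTL LE2 (Negz 1) (Posz 0) (Posz 0), [:: LT (Negz 0) (Posz 0) (Negz 0)]);
  ([:: ((Negz 0), (Posz 1)); ((Posz 1), (Negz 3)); ((Posz 3), (Posz 6)); ((Posz 5), (Negz 3)); ((Posz 7), (Posz 1))], [:: LF3; LE3], RTT (Negz 1) (Posz 0) (Posz 0) (Negz 0) (Posz 0) (Negz 0), [::]);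
  ([:: ((Negz 2), (Negz 0)); ((Negz 0), (Posz 4)); ((Posz 1), (Negz 5)); ((Posz 3), (Posz 4)); ((Posz 5), (Negz 0))], [:: LF2; LE2], RTT (Negz 1) (Posz 0) (Posz 0) (Posz 0) (Negz 0) (Negz 0), [::]);
  ([:: ((Negz 2), (Posz 1)); ((Negz 0), (Negz 3)); ((Posz 1), (Posz 6)); ((Posz 3), (Negz 3)); ((Posz 5), (Posz 1))], [:: LF1; LE1], RTT (Negz 1) (Posz 0) (Posz 0) (Negz 0) (Negz 0) (Posz 0), [::]);
  ([:: ((Posz 0), (Posz 1)); ((Posz 2), (Negz 2)); ((Posz 4), (Posz 3)); ((Posz 6), (Negz 0))], [::], RN 0, [:: LT (Negz 1) (Posz 0) (Posz 0); LT (Negz 0) (Negz 0) (Posz 0)]);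
  ([:: ((Negz 1), (Posz 1)); ((Posz 0), (Negz 2)); ((Posz 2), (Posz 3)); ((Posz 4), (Negz 0))], [::], RTT (Posz 0) (Negz 1) (Posz 0) (Posz 0) (Posz 0) (Negz 1), [::]);
  ([:: ((Negz 1), (Negz 0)); ((Posz 0), (Posz 3)); ((Posz 2), (Negz 2)); ((Posz 4), (Posz 1))], [::], RTT (Negz 1) (Posz 0) (Posz 0) (Posz 0) (Posz 0) (Negz 1), [::]);
  ([:: ((Negz 3), (Posz 1)); ((Negz 1), (Negz 5)); ((Posz 0), (Posz 15)); ((Posz 2), (Negz 19)); ((Posz 4), (Posz 15)); ((Posz 6), (Negz 5)); ((Posz 8), (Posz 1))], [:: LF1], RN 11, [:: LT (Negz 0) (Negz 0) (Posz 0); LF3; LT (Negz 0) (Posz 0) (Negz 0)]);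
  ([:: ((Negz 1), (Posz 1)); ((Posz 0), (Negz 4)); ((Posz 2), (Posz 10)); ((Posz 4), (Negz 9)); ((Posz 6), (Posz 5)); ((Posz 8), (Negz 0))], [:: LF1], RN 17, [:: LT (Negz 0) (Negz 0) (Posz 0); LT (Posz 0) (Negz 0) (Negz 0)]);
  ([:: ((Negz 2), (Negz 0)); ((Negz 0), (Posz 5)); ((Posz 1), (Negz 9)); ((Posz 3), (Posz 10)); ((Posz 5), (Negz 4)); ((Posz 7), (Posz 1))], [:: LE2], RTL LF2 (Negz 1) (Posz 0) (Posz 0), [:: LT (Posz 0) (Negz 0) (Negz 0)]);
  ([:: ((Negz 5), (Negz 0)); ((Negz 3), (Posz 5)); ((Negz 1), (Negz 9)); ((Posz 0), (Posz 10)); ((Posz 2), (Negz 4)); ((Posz 4), (Posz 1))], [::], RN 10, [:: LT (Negz 1) (Posz 0) (Posz 0); LF3; LT (Negz 0) (Posz 0) (Negz 0)]);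
  ([:: ((Negz 1), (Posz 1)); ((Posz 0), (Negz 1)); ((Posz 4), (Posz 2)); ((Posz 6), (Negz 0))], [::], RTT (Posz 0) (Posz 1) (Negz 0) (Negz 1) (Posz 0) (Posz 0), [:: LT (Posz 0) (Negz 0) (Negz 0)]);
  ([:: ((Negz 1), (Negz 0)); ((Posz 0), (Posz 2)); ((Posz 4), (Negz 1)); ((Posz 6), (Posz 1))], [::], RTT (Posz 0) (Negz 0) (Posz 1) (Negz 1) (Posz 0) (Posz 0), [:: LT (Posz 0) (Negz 0) (Negz 0)]);
  ([:: ((Negz 2), (Posz 1)); ((Negz 0), (Negz 4)); ((Posz 1), (Posz 10)); ((Posz 3), (Negz 9)); ((Posz 5), (Posz 5)); ((Posz 7), (Negz 0))], [::], RTL LE3 (Posz 0) (Negz 1) (Posz 0), [:: LF3; LT (Negz 0) (Posz 0) (Negz 0)]);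
  ([:: ((Negz 2), (Negz 0)); ((Negz 0), (Posz 5)); ((Posz 1), (Negz 9)); ((Posz 3), (Posz 10)); ((Posz 5), (Negz 4)); ((Posz 7), (Posz 1))], [::], RTL LE3 (Negz 1) (Posz 0) (Posz 0), [:: LF3; LT (Negz 0) (Posz 0) (Negz 0)]);
  ([:: ((Posz 0), (Posz 1)); ((Posz 2), (Negz 2)); ((Posz 4), (Posz 3)); ((Posz 6), (Negz 0))], [::], RN 20, [:: LT (Negz 1) (Posz 0) (Posz 0); LT (Negz 0) (Posz 0) (Negz 0)]);
  ([:: ((Negz 1), (Posz 1)); ((Posz 0), (Negz 2)); ((Posz 2), (Posz 3)); ((Posz 4), (Negz 0))], [::], RN 20, [:: LT (Posz 0) (Negz 1) (Posz 0); LT (Negz 0) (Posz 0) (Negz 0)]);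
  ([:: ((Negz 2), (Posz 1)); ((Negz 0), (Negz 4)); ((Posz 1), (Posz 10)); ((Posz 3), (Negz 9)); ((Posz 5), (Posz 5)); ((Posz 7), (Negz 0))], [:: LF3; LE1; LE2], RTT (Negz 1) (Posz 0) (Posz 0) (Negz 0) (Posz 0) (Negz 0), [::]);
  ([:: ((Negz 0), (Negz 0)); ((Posz 1), (Posz 4)); ((Posz 3), (Negz 5)); ((Posz 5), (Posz 4)); ((Posz 7), (Negz 0))], [:: LF1; LE1], RTT (Negz 1) (Posz 0) (Posz 0) (Negz 0) (Negz 0) (Posz 0), [::]);
  ([:: ((Posz 0), (Posz 1)); ((Posz 2), (Negz 2)); ((Posz 4), (Posz 3)); ((Posz 6), (Negz 0))], [::], RTT (Posz 1) (Negz 0) (Posz 0) (Negz 1) (Posz 0) (Posz 0), [:: LT (Negz 0) (Negz 0) (Posz 0)]);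
  ([:: ((Posz 0), (Negz 0)); ((Posz 2), (Posz 3)); ((Posz 4), (Negz 2)); ((Posz 6), (Posz 1))], [::], RTT (Negz 0) (Posz 1) (Posz 0) (Negz 1) (Posz 0) (Posz 0), [:: LT (Negz 0) (Negz 0) (Posz 0)]);
  ([:: ((Negz 1), (Posz 1)); ((Posz 0), (Negz 4)); ((Posz 2), (Posz 10)); ((Posz 4), (Negz 9)); ((Posz 6), (Posz 5)); ((Posz 8), (Negz 0))], [:: LF1; LF2; LE3], RTT (Negz 0) (Negz 0) (Posz 0) (Posz 0) (Negz 0) (Negz 0), [::]);
  ([:: ((Negz 2), (Posz 1)); ((Negz 0), (Negz 4)); ((Posz 1), (Posz 10)); ((Posz 3), (Negz 9)); ((Posz 5), (Posz 5)); ((Posz 7), (Negz 0))], [:: LF1; LE1], RTT (Posz 0) (Posz 1) (Negz 0) (Negz 0) (Negz 0) (Posz 0), [:: LT (Posz 0) (Negz 0) (Negz 0)]);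
  ([:: ((Negz 1), (Posz 1)); ((Posz 0), (Negz 3)); ((Posz 2), (Posz 6)); ((Posz 4), (Negz 3)); ((Posz 6), (Posz 1))], [::], RN 1, [:: LT (Negz 1) (Posz 0) (Posz 0); LT (Posz 0) (Negz 0) (Negz 0)]);
  ([:: ((Negz 4), (Negz 0)); ((Negz 2), (Posz 5)); ((Negz 0), (Negz 9)); ((Posz 1), (Posz 10)); ((Posz 3), (Negz 4)); ((Posz 5), (Posz 1))], [:: LE1; LE2], RTL LF3 (Negz 1) (Posz 0) (Posz 0), [:: LT (Negz 0) (Posz 0) (Negz 0)]);
  ([:: ((Negz 1), (Posz 1)); ((Posz 0), (Negz 1)); ((Posz 4), (Posz 2)); ((Posz 6), (Negz 0))], [::], RTT (Negz 1) (Posz 1) (Negz 0) (Posz 0) (Negz 0) (Negz 0), [::]);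
  ([:: ((Negz 1), (Negz 0)); ((Posz 0), (Posz 2)); ((Posz 4), (Negz 1)); ((Posz 6), (Posz 1))], [::], RTT (Negz 1) (Negz 0) (Posz 1) (Posz 0) (Negz 0) (Negz 0), [::]);
  ([:: ((Negz 2), (Posz 1)); ((Negz 0), (Negz 4)); ((Posz 1), (Posz 10)); ((Posz 3), (Negz 9)); ((Posz 5), (Posz 5)); ((Posz 7), (Negz 0))], [:: LE3], RTL LF3 (Posz 0) (Negz 1) (Posz 0), [:: LT (Negz 0) (Posz 0) (Negz 0)]);
  ([:: ((Negz 0), (Negz 0)); ((Posz 1), (Posz 4)); ((Posz 3), (Negz 5)); ((Posz 5), (Posz 4)); ((Posz 7), (Negz 0))], [:: LF3; LE3], RTT (Negz 1) (Posz 0) (Posz 0) (Negz 0) (Posz 0) (Negz 0), [::]);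
  ([:: ((Posz 0), (Posz 1)); ((Posz 2), (Negz 2)); ((Posz 4), (Posz 3)); ((Posz 6), (Negz 0))], [::], RTT (Posz 1) (Posz 0) (Negz 0) (Negz 1) (Posz 0) (Posz 0), [:: LT (Negz 0) (Posz 0) (Negz 0)]);
  ([:: ((Posz 0), (Negz 0)); ((Posz 2), (Posz 3)); ((Posz 4), (Negz 2)); ((Posz 6), (Posz 1))], [::], RTT (Negz 0) (Posz 0) (Posz 1) (Negz 1) (Posz 0) (Posz 0), [:: LT (Negz 0) (Posz 0) (Negz 0)]);
  ([:: ((Negz 2), (Negz 0)); ((Negz 0), (Posz 4)); ((Posz 1), (Negz 5)); ((Posz 3), (Posz 4)); ((Posz 5), (Negz 0))], [:: LF3; LE3], RTT (Posz 0) (Negz 1) (Posz 0) (Negz 0) (Posz 0) (Negz 0), [::]);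
  ([:: ((Negz 1), (Posz 1)); ((Posz 0), (Negz 2)); ((Posz 2), (Posz 3)); ((Posz 4), (Negz 0))], [::], RTT (Posz 1) (Posz 0) (Negz 0) (Posz 0) (Negz 1) (Posz 0), [:: LT (Negz 0) (Posz 0) (Negz 0)]);
  ([:: ((Negz 1), (Negz 0)); ((Posz 0), (Posz 3)); ((Posz 2), (Negz 2)); ((Posz 4), (Posz 1))], [::], RTT (Negz 0) (Posz 0) (Posz 1) (Posz 0) (Negz 1) (Posz 0), [:: LT (Negz 0) (Posz 0) (Negz 0)]);
  ([:: ((Posz 0), (Posz 1)); ((Posz 2), (Negz 2)); ((Posz 4), (Posz 3)); ((Posz 6), (Negz 0))], [::], RTT (Negz 0) (Negz 0) (Posz 0) (Negz 0) (Negz 0) (Posz 0), [::]);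
  ([:: ((Posz 0), (Negz 0)); ((Posz 2), (Posz 3)); ((Posz 4), (Negz 2)); ((Posz 6), (Posz 1))], [::], RTT (Negz 2) (Posz 1) (Posz 0) (Negz 0) (Negz 0) (Posz 0), [::]);
  ([:: ((Negz 2), (Posz 1)); ((Negz 0), (Negz 4)); ((Posz 1), (Posz 10)); ((Posz 3), (Negz 9)); ((Posz 5), (Posz 5)); ((Posz 7), (Negz 0))], [:: LF1; LE1], RTT (Negz 0) (Posz 0) (Negz 0) (Posz 0) (Negz 0) (Negz 0), [::]);
  ([:: ((Negz 2), (Negz 0)); ((Negz 0), (Posz 5)); ((Posz 1), (Negz 9)); ((Posz 3), (Posz 10)); ((Posz 5), (Negz 4)); ((Posz 7), (Posz 1))], [:: LF2; LE2], RTT (Negz 1) (Posz 0) (Posz 0) (Posz 0) (Negz 0) (Negz 0), [::]);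
  ([:: ((Negz 1), (Posz 1)); ((Posz 0), (Negz 3)); ((Posz 2), (Posz 6)); ((Posz 4), (Negz 3)); ((Posz 6), (Posz 1))], [::], RTT (Posz 0) (Posz 1) (Negz 0) (Negz 1) (Posz 0) (Posz 0), [:: LT (Posz 0) (Negz 0) (Negz 0)]);
  ([:: ((Negz 1), (Negz 0)); ((Posz 0), (Posz 4)); ((Posz 2), (Negz 5)); ((Posz 4), (Posz 4)); ((Posz 6), (Negz 0))], [::], RTT (Posz 0) (Negz 0) (Posz 1) (Negz 1) (Posz 0) (Posz 0), [:: LT (Posz 0) (Negz 0) (Negz 0)]);
  ([:: ((Negz 2), (Negz 0)); ((Negz 0), (Posz 5)); ((Posz 1), (Negz 9)); ((Posz 3), (Posz 10)); ((Posz 5), (Negz 4)); ((Posz 7), (Posz 1))], [:: LE1], RN 19, [:: LT (Negz 1) (Posz 0) (Posz 0); LT (Negz 0) (Posz 0) (Negz 0)]);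
  ([:: ((Negz 1), (Negz 0)); ((Posz 0), (Posz 4)); ((Posz 2), (Negz 5)); ((Posz 4), (Posz 4)); ((Posz 6), (Negz 0))], [::], RN 20, [:: LT (Posz 0) (Negz 1) (Posz 0); LT (Negz 0) (Posz 0) (Negz 0)]);
  ([:: ((Posz 0), (Posz 1)); ((Posz 2), (Negz 2)); ((Posz 4), (Posz 3)); ((Posz 6), (Negz 0))], [::], RTT (Negz 0) (Posz 0) (Negz 0) (Negz 0) (Posz 0) (Negz 0), [::]);
  ([:: ((Posz 0), (Negz 0)); ((Posz 2), (Posz 3)); ((Posz 4), (Negz 2)); ((Posz 6), (Posz 1))], [::], RTT (Negz 2) (Posz 0) (Posz 1) (Negz 0) (Posz 0) (Negz 0), [::]);
  ([:: ((Negz 1), (Posz 1)); ((Posz 0), (Negz 2)); ((Posz 2), (Posz 3)); ((Posz 4), (Negz 0))], [::], RTT (Posz 1) (Negz 1) (Negz 0) (Negz 0) (Posz 0) (Negz 0), [::]);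
  ([:: ((Negz 1), (Negz 0)); ((Posz 0), (Posz 3)); ((Posz 2), (Negz 2)); ((Posz 4), (Posz 1))], [::], RTT (Negz 0) (Negz 1) (Posz 1) (Negz 0) (Posz 0) (Negz 0), [::]);
  ([:: ((Negz 1), (Posz 1)); ((Posz 0), (Negz 3)); ((Posz 2), (Posz 6)); ((Posz 4), (Negz 3)); ((Posz 6), (Posz 1))], [::], RTT (Negz 1) (Posz 1) (Negz 0) (Posz 0) (Negz 0) (Negz 0), [::]);
  ([:: ((Negz 1), (Negz 0)); ((Posz 0), (Posz 4)); ((Posz 2), (Negz 5)); ((Posz 4), (Posz 4)); ((Posz 6), (Negz 0))], [::], RTT (Negz 1) (Negz 0) (Posz 1) (Posz 0) (Negz 0) (Negz 0), [::]);
  ([:: ((Negz 2), (Negz 0)); ((Negz 0), (Posz 5)); ((Posz 1), (Negz 9)); ((Posz 3), (Posz 10)); ((Posz 5), (Negz 4)); ((Posz 7), (Posz 1))], [::], RN 18, [:: LE2; LT (Negz 1) (Posz 0) (Posz 0); LT (Negz 0) (Posz 0) (Negz 0)]);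
  ([:: ((Negz 1), (Posz 1)); ((Posz 0), (Negz 3)); ((Posz 2), (Posz 6)); ((Posz 4), (Negz 3)); ((Posz 6), (Posz 1))], [::], RN 0, [:: LT (Posz 0) (Negz 0) (Posz 1); LT (Negz 1) (Posz 0) (Posz 0); LT (Negz 0) (Posz 0) (Negz 0)]);
  ([:: ((Negz 2), (Posz 1)); ((Negz 0), (Negz 4)); ((Posz 1), (Posz 10)); ((Posz 3), (Negz 9)); ((Posz 5), (Posz 5)); ((Posz 7), (Negz 0))], [:: LF3; LE3], RTT (Posz 0) (Negz 1) (Posz 0) (Negz 0) (Posz 0) (Negz 0), [::]);
  ([:: ((Negz 1), (Negz 0)); ((Posz 0), (Posz 4)); ((Posz 2), (Negz 5)); ((Posz 4), (Posz 4)); ((Posz 6), (Negz 0))], [::], RTT (Posz 1) (Posz 0) (Negz 0) (Posz 0) (Negz 1) (Posz 0), [:: LT (Negz 0) (Posz 0) (Negz 0)]);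
  ([:: ((Negz 1), (Posz 1)); ((Posz 0), (Negz 3)); ((Posz 2), (Posz 6)); ((Posz 4), (Negz 3)); ((Posz 6), (Posz 1))], [::], RTT (Negz 0) (Posz 0) (Posz 1) (Posz 0) (Negz 1) (Posz 0), [:: LT (Negz 0) (Posz 0) (Negz 0)]);
  ([:: ((Negz 2), (Negz 0)); ((Negz 0), (Posz 5)); ((Posz 1), (Negz 9)); ((Posz 3), (Posz 10)); ((Posz 5), (Negz 4)); ((Posz 7), (Posz 1))], [:: LF3; LE1; LE2], RTT (Negz 1) (Posz 0) (Posz 0) (Negz 0) (Posz 0) (Negz 0), [::]);
  ([:: ((Negz 1), (Posz 1)); ((Posz 0), (Negz 4)); ((Posz 2), (Posz 10)); ((Posz 4), (Negz 9)); ((Posz 6), (Posz 5)); ((Posz 8), (Negz 0))], [:: LF2], RTL LE2 (Posz 1) (Negz 0) (Posz 0), [:: LT (Negz 1) (Posz 0) (Posz 0); LT (Negz 0) (Posz 0) (Negz 0)]);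
  ([:: ((Negz 2), (Negz 0)); ((Negz 0), (Posz 5)); ((Posz 1), (Negz 9)); ((Posz 3), (Posz 10)); ((Posz 5), (Negz 4)); ((Posz 7), (Posz 1))], [:: LF1; LE1], RTT (Posz 0) (Negz 0) (Posz 1) (Negz 1) (Posz 0) (Posz 0), [:: LT (Negz 0) (Posz 0) (Negz 0)]);
  ([:: ((Negz 1), (Posz 1)); ((Posz 0), (Negz 3)); ((Posz 2), (Posz 6)); ((Posz 4), (Negz 3)); ((Posz 6), (Posz 1))], [::], RTT (Posz 1) (Negz 0) (Posz 0) (Posz 0) (Negz 0) (Posz 1), [:: LT (Negz 1) (Posz 0) (Posz 0); LT (Negz 0) (Posz 0) (Negz 0)]);
  ([:: ((Negz 1), (Negz 0)); ((Posz 0), (Posz 4)); ((Posz 2), (Negz 5)); ((Posz 4), (Posz 4)); ((Posz 6), (Negz 0))], [::], RTT (Negz 0) (Posz 1) (Posz 0) (Posz 0) (Negz 0) (Posz 1), [:: LT (Negz 1) (Posz 0) (Posz 0); LT (Negz 0) (Posz 0) (Negz 0)]);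
  ([:: ((Negz 1), (Negz 0)); ((Posz 0), (Posz 4)); ((Posz 2), (Negz 5)); ((Posz 4), (Posz 4)); ((Posz 6), (Negz 0))], [::], RTT (Posz 1) (Negz 1) (Negz 0) (Negz 0) (Posz 0) (Negz 0), [::]);
  ([:: ((Negz 1), (Posz 1)); ((Posz 0), (Negz 3)); ((Posz 2), (Posz 6)); ((Posz 4), (Negz 3)); ((Posz 6), (Posz 1))], [::], RTT (Negz 0) (Negz 1) (Posz 1) (Negz 0) (Posz 0) (Negz 0), [::]);
  ([:: ((Negz 2), (Posz 1)); ((Negz 0), (Negz 4)); ((Posz 1), (Posz 10)); ((Posz 3), (Negz 9)); ((Posz 5), (Posz 5)); ((Posz 7), (Negz 0))], [:: LF2; LE2], RTT (Posz 1) (Negz 0) (Posz 0) (Negz 1) (Posz 0) (Posz 0), [:: LT (Negz 0) (Posz 0) (Negz 0)]);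
  ([:: ((Negz 2), (Negz 0)); ((Negz 0), (Posz 5)); ((Posz 1), (Negz 9)); ((Posz 3), (Posz 10)); ((Posz 5), (Negz 4)); ((Posz 7), (Posz 1))], [:: LF1; LE1], RTT (Negz 1) (Negz 0) (Posz 1) (Negz 0) (Posz 0) (Negz 0), [::]);
  ([:: ((Negz 1), (Posz 1)); ((Posz 0), (Negz 3)); ((Posz 2), (Posz 6)); ((Posz 4), (Negz 3)); ((Posz 6), (Posz 1))], [::], RTT (Posz 1) (Negz 1) (Posz 1) (Negz 1) (Posz 0) (Posz 0), [:: LT (Negz 0) (Posz 0) (Negz 0)]);
  ([:: ((Negz 1), (Negz 0)); ((Posz 0), (Posz 4)); ((Posz 2), (Negz 5)); ((Posz 4), (Posz 4)); ((Posz 6), (Negz 0))], [::], RTT (Negz 0) (Posz 0) (Posz 1) (Negz 1) (Posz 0) (Posz 0), [:: LT (Negz 0) (Posz 0) (Negz 0)]);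
  ([:: ((Negz 2), (Posz 1)); ((Negz 0), (Negz 4)); ((Posz 1), (Posz 10)); ((Posz 3), (Negz 9)); ((Posz 5), (Posz 5)); ((Posz 7), (Negz 0))], [:: LF2; LE2], RTT (Negz 0) (Negz 0) (Posz 0) (Negz 0) (Posz 0) (Negz 0), [::]);
  ([:: ((Negz 1), (Posz 1)); ((Posz 0), (Negz 3)); ((Posz 2), (Posz 6)); ((Posz 4), (Negz 3)); ((Posz 6), (Posz 1))], [::], RTT (Negz 0) (Negz 1) (Posz 1) (Negz 0) (Posz 0) (Negz 0), [::]);
  ([:: ((Negz 1), (Negz 0)); ((Posz 0), (Posz 4)); ((Posz 2), (Negz 5)); ((Posz 4), (Posz 4)); ((Posz 6), (Negz 0))], [::], RTT (Negz 2) (Posz 0) (Posz 1) (Negz 0) (Posz 0) (Negz 0), [::])] : seq certterm).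
case: n Hn => [|n] Hn /=; first refl_close qp g sound 1%N ([:: ([:: ((Negz 0), (Negz 0)); ((Posz 1), (Posz 4)); ((Posz 3), (Negz 5)); ((Posz 5), (Posz 4)); ((Posz 7), (Negz 0))], [::], RTL LF1 (Negz 1) (Posz 0) (Posz 0), [:: LF2; LE3; LT (Negz 0) (Negz 1) (Negz 0)]);
  ([:: ((Posz 0), (Posz 1)); ((Posz 2), (Negz 2)); ((Posz 4), (Posz 3)); ((Posz 6), (Negz 0))], [::], RTL LF3 (Negz 1) (Posz 0) (Posz 0), [:: LE3; LT (Negz 0) (Negz 1) (Negz 0)]);
  ([:: ((Negz 1), (Posz 1)); ((Posz 0), (Negz 2)); ((Posz 2), (Posz 3)); ((Posz 4), (Negz 0))], [::], RTL LF2 (Negz 1) (Posz 0) (Posz 0), [:: LE2; LT (Negz 1) (Negz 0) (Negz 0)]);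
  ([:: ((Posz 0), (Posz 1)); ((Posz 2), (Negz 2)); ((Posz 4), (Posz 3)); ((Posz 6), (Negz 0))], [::], RTL LF1 (Negz 1) (Posz 0) (Posz 0), [:: LE1; LT (Negz 0) (Negz 0) (Negz 1)]);
  ([:: ((Posz 3), (Posz 1)); ((Posz 5), (Negz 0))], [::], RTT (Negz 1) (Posz 0) (Posz 0) (Posz 0) (Negz 1) (Negz 1), [::]);
  ([:: ((Posz 1), (Posz 1)); ((Posz 3), (Negz 0))], [::], RTT (Negz 1) (Posz 0) (Posz 0) (Negz 1) (Posz 0) (Negz 1), [::]);
  ([:: ((Negz 0), (Posz 1)); ((Posz 1), (Negz 0))], [::], RTT (Negz 1) (Posz 0) (Posz 0) (Negz 1) (Negz 1) (Posz 0), [::]);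
  ([:: ((Posz 3), (Negz 0)); ((Posz 5), (Posz 1))], [::], RTT (Negz 1) (Posz 0) (Posz 0) (Negz 1) (Posz 0) (Posz 0), [:: LT (Posz 0) (Negz 1) (Posz 0)]);
  ([:: ((Negz 1), (Negz 0)); ((Posz 0), (Posz 3)); ((Posz 2), (Negz 2)); ((Posz 4), (Posz 1))], [::], RTL LE1 (Negz 1) (Posz 0) (Posz 0), [:: LF1; LT (Negz 0) (Negz 0) (Posz 0); LT (Posz 0) (Posz 0) (Negz 1)]);
  ([:: ((Posz 1), (Negz 0)); ((Posz 3), (Posz 1))], [::], RTT (Negz 1) (Posz 0) (Posz 0) (Negz 1) (Posz 0) (Posz 0), [:: LT (Posz 0) (Posz 0) (Negz 1)]);
  ([:: ((Negz 0), (Negz 0)); ((Posz 3), (Posz 1))], [::], RTT (Negz 1) (Posz 0) (Posz 0) (Posz 0) (Negz 1) (Posz 0), [:: LT (Posz 0) (Posz 0) (Negz 1)]);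
  ([:: ((Negz 1), (Posz 1)); ((Posz 0), (Negz 3)); ((Posz 2), (Posz 6)); ((Posz 4), (Negz 3)); ((Posz 6), (Posz 1))], [::], RN 16, [:: LT (Negz 0) (Negz 0) (Posz 0); LT (Negz 1) (Posz 0) (Posz 0); LF2; LT (Posz 0) (Negz 0) (Negz 0)]);
  ([:: ((Posz 0), (Negz 0)); ((Posz 2), (Posz 3)); ((Posz 4), (Negz 2)); ((Posz 6), (Posz 1))], [::], RTL LE2 (Negz 1) (Posz 0) (Posz 0), [:: LT (Negz 1) (Posz 0) (Posz 0); LF2; LT (Posz 0) (Negz 0) (Negz 0)]);
  ([:: ((Posz 0), (Negz 0)); ((Posz 2), (Posz 3)); ((Posz 4), (Negz 2)); ((Posz 6), (Posz 1))], [::], RTT (Negz 1) (Posz 0) (Posz 0) (Posz 0) (Negz 1) (Posz 0), [:: LE3; LF3; LT (Negz 0) (Posz 0) (Negz 0)]);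
  ([:: ((Posz 1), (Negz 0)); ((Posz 3), (Posz 4)); ((Posz 5), (Negz 5)); ((Posz 7), (Posz 4)); ((Posz 9), (Negz 0))], [:: LF1], RTL LF2 (Negz 1) (Posz 0) (Posz 0), [:: LE3; LT (Negz 0) (Negz 1) (Negz 0)]);
  ([:: ((Posz 2), (Posz 1)); ((Posz 4), (Negz 2)); ((Posz 6), (Posz 3)); ((Posz 8), (Negz 0))], [:: LF3], RTL LE3 (Negz 1) (Posz 0) (Posz 0), [:: LT (Negz 0) (Negz 1) (Negz 0)]);
  ([:: ((Negz 1), (Posz 1)); ((Posz 0), (Negz 2)); ((Posz 2), (Posz 3)); ((Posz 4), (Negz 0))], [:: LF2], RTL LE2 (Negz 1) (Posz 0) (Posz 0), [:: LT (Negz 1) (Negz 0) (Negz 0)]);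
  ([:: ((Posz 2), (Posz 1)); ((Posz 4), (Negz 2)); ((Posz 6), (Posz 3)); ((Posz 8), (Negz 0))], [:: LF1], RTL LE1 (Negz 1) (Posz 0) (Posz 0), [:: LT (Negz 0) (Negz 0) (Negz 1)]);
  ([:: ((Posz 3), (Negz 0)); ((Posz 5), (Posz 1))], [::], RTT (Negz 3) (Posz 0) (Posz 0) (Posz 0) (Negz 1) (Posz 0), [::]);
  ([:: ((Negz 3), (Negz 0)); ((Negz 1), (Posz 3)); ((Posz 0), (Negz 2)); ((Posz 2), (Posz 1))], [:: LE1], RTL LF1 (Negz 1) (Posz 0) (Posz 0), [:: LT (Negz 0) (Negz 0) (Posz 0); LT (Posz 0) (Posz 0) (Negz 1)]);
  ([:: ((Posz 1), (Negz 0)); ((Posz 3), (Posz 1))], [::], RTT (Negz 3) (Posz 0) (Posz 0) (Posz 0) (Posz 0) (Negz 1), [::]);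
  ([:: ((Negz 0), (Negz 0)); ((Posz 3), (Posz 1))], [::], RTT (Negz 1) (Negz 1) (Posz 0) (Posz 0) (Posz 0) (Negz 1), [::]);
  ([:: ((Negz 1), (Posz 1)); ((Posz 0), (Negz 3)); ((Posz 2), (Posz 6)); ((Posz 4), (Negz 3)); ((Posz 6), (Posz 1))], [:: LF1; LE3], RTT (Negz 0) (Negz 0) (Posz 0) (Negz 1) (Posz 0) (Posz 0), [:: LF2; LT (Posz 0) (Negz 0) (Negz 0)]);
  ([:: ((Negz 1), (Negz 0)); ((Posz 0), (Posz 4)); ((Posz 2), (Negz 5)); ((Posz 4), (Posz 4)); ((Posz 6), (Negz 0))], [:: LE2], RTT (Negz 0) (Posz 1) (Posz 0) (Negz 0) (Negz 0) (Posz 0), [:: LT (Negz 1) (Posz 0) (Posz 0); LF2; LT (Posz 0) (Negz 0) (Negz 0)]);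
  ([:: ((Negz 1), (Negz 0)); ((Posz 0), (Posz 3)); ((Posz 2), (Negz 2)); ((Posz 4), (Posz 1))], [:: LE2], RTT (Negz 1) (Posz 0) (Posz 0) (Negz 1) (Posz 0) (Posz 0), [:: LF2; LT (Posz 0) (Negz 0) (Negz 0)]);
  ([:: ((Posz 0), (Negz 0)); ((Posz 2), (Posz 3)); ((Posz 4), (Negz 2)); ((Posz 6), (Posz 1))], [::], RTL LE3 (Negz 1) (Negz 1) (Posz 0), [:: LF3; LT (Negz 0) (Posz 0) (Negz 0)]);
  ([:: ((Posz 1), (Negz 0)); ((Posz 3), (Posz 4)); ((Posz 5), (Negz 5)); ((Posz 7), (Posz 4)); ((Posz 9), (Negz 0))], [:: LF1; LF2], RTL LE3 (Negz 1) (Posz 0) (Posz 0), [:: LT (Negz 0) (Negz 1) (Negz 0)]);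
  ([:: ((Posz 0), (Posz 1)); ((Posz 2), (Negz 2)); ((Posz 4), (Posz 3)); ((Posz 6), (Negz 0))], [:: LF3; LE3], RTT (Negz 1) (Posz 0) (Posz 0) (Negz 0) (Negz 1) (Negz 0), [::]);
  ([:: ((Negz 1), (Posz 1)); ((Posz 0), (Negz 2)); ((Posz 2), (Posz 3)); ((Posz 4), (Negz 0))], [:: LF2; LE2], RTT (Negz 1) (Posz 0) (Posz 0) (Negz 1) (Negz 0) (Negz 0), [::]);
  ([:: ((Posz 0), (Posz 1)); ((Posz 2), (Negz 2)); ((Posz 4), (Posz 3)); ((Posz 6), (Negz 0))], [:: LF1; LE1], RTT (Negz 1) (Posz 0) (Posz 0) (Negz 0) (Negz 0) (Negz 1), [::]);
  ([:: ((Negz 0), (Posz 1)); ((Posz 1), (Negz 1)); ((Posz 3), (Posz 1))], [::], RN 0, [:: LT (Negz 1) (Posz 0) (Posz 0); LT (Negz 0) (Negz 0) (Posz 0); LT (Posz 0) (Posz 0) (Negz 1)]);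
  ([:: ((Negz 1), (Posz 1)); ((Posz 0), (Negz 3)); ((Posz 2), (Posz 6)); ((Posz 4), (Negz 3)); ((Posz 6), (Posz 1))], [:: LF1; LE3], RTL LF2 (Negz 2) (Negz 0) (Posz 0), [:: LT (Posz 0) (Negz 0) (Negz 0)]);
  ([:: ((Negz 1), (Negz 0)); ((Posz 0), (Posz 3)); ((Posz 2), (Negz 2)); ((Posz 4), (Posz 1))], [:: LE2], RTL LF2 (Negz 3) (Posz 0) (Posz 0), [:: LT (Posz 0) (Negz 0) (Negz 0)]);
  ([:: ((Negz 1), (Negz 0)); ((Posz 0), (Posz 3)); ((Posz 2), (Negz 2)); ((Posz 4), (Posz 1))], [:: LE3], RTL LF3 (Negz 1) (Negz 1) (Posz 0), [:: LT (Negz 0) (Posz 0) (Negz 0)]);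
  ([:: ((Negz 0), (Negz 0)); ((Posz 1), (Posz 4)); ((Posz 3), (Negz 5)); ((Posz 5), (Posz 4)); ((Posz 7), (Negz 0))], [:: LF1; LF2; LE3], RTT (Negz 1) (Posz 0) (Posz 0) (Negz 0) (Negz 1) (Negz 0), [::]);
  ([:: ((Negz 1), (Negz 0)); ((Posz 0), (Posz 3)); ((Posz 2), (Negz 2)); ((Posz 4), (Posz 1))], [:: LF1; LE1], RTT (Negz 1) (Posz 0) (Posz 0) (Negz 0) (Negz 0) (Posz 0), [:: LT (Posz 0) (Posz 0) (Negz 1)]);
  ([:: ((Negz 0), (Posz 1)); ((Posz 1), (Negz 1)); ((Posz 3), (Posz 1))], [::], RTT (Posz 1) (Negz 0) (Posz 0) (Negz 1) (Posz 0) (Posz 0), [:: LT (Negz 0) (Negz 0) (Posz 0); LT (Posz 0) (Posz 0) (Negz 1)]);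
  ([:: ((Negz 0), (Negz 0)); ((Posz 1), (Posz 2)); ((Posz 3), (Negz 0))], [::], RTT (Negz 0) (Posz 1) (Posz 0) (Negz 1) (Posz 0) (Posz 0), [:: LT (Negz 0) (Negz 0) (Posz 0); LT (Posz 0) (Posz 0) (Negz 1)]);
  ([:: ((Negz 0), (Posz 1)); ((Posz 1), (Negz 3)); ((Posz 3), (Posz 6)); ((Posz 5), (Negz 3)); ((Posz 7), (Posz 1))], [:: LF1], RN 17, [:: LT (Negz 2) (Negz 0) (Posz 0); LT (Posz 0) (Negz 0) (Negz 0)]);
  ([:: ((Negz 0), (Posz 1)); ((Posz 1), (Negz 1)); ((Posz 3), (Posz 1))], [::], RN 1, [:: LT (Negz 3) (Posz 0) (Posz 0); LT (Posz 0) (Negz 0) (Negz 0)]);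
  ([:: ((Posz 1), (Posz 1)); ((Posz 3), (Negz 1)); ((Posz 5), (Posz 1))], [::], RN 20, [:: LT (Negz 1) (Negz 1) (Posz 0); LT (Negz 0) (Posz 0) (Negz 0)]);
  ([:: ((Negz 1), (Negz 0)); ((Posz 0), (Posz 3)); ((Posz 2), (Negz 2)); ((Posz 4), (Posz 1))], [:: LF1; LE1], RTT (Negz 2) (Negz 0) (Posz 0) (Posz 0) (Posz 0) (Negz 1), [::]);
  ([:: ((Negz 0), (Posz 1)); ((Posz 1), (Negz 1)); ((Posz 3), (Posz 1))], [::], RTT (Negz 0) (Negz 0) (Posz 0) (Negz 0) (Negz 0) (Posz 0), [:: LT (Posz 0) (Posz 0) (Negz 1)]);
  ([:: ((Negz 0), (Negz 0)); ((Posz 1), (Posz 2)); ((Posz 3), (Negz 0))], [::], RTT (Negz 2) (Posz 1) (Posz 0) (Negz 0) (Negz 0) (Posz 0), [:: LT (Posz 0) (Posz 0) (Negz 1)]);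
  ([:: ((Negz 0), (Posz 1)); ((Posz 1), (Negz 3)); ((Posz 3), (Posz 6)); ((Posz 5), (Negz 3)); ((Posz 7), (Posz 1))], [:: LF1; LF2; LE3], RTT (Negz 2) (Negz 0) (Posz 0) (Posz 0) (Negz 0) (Negz 0), [::]);
  ([:: ((Negz 1), (Posz 1)); ((Posz 0), (Negz 3)); ((Posz 2), (Posz 6)); ((Posz 4), (Negz 3)); ((Posz 6), (Posz 1))], [:: LF1; LE1], RTT (Posz 0) (Posz 1) (Negz 0) (Negz 2) (Negz 0) (Posz 0), [:: LT (Posz 0) (Negz 0) (Negz 0)]);
  ([:: ((Negz 1), (Negz 0)); ((Posz 0), (Posz 3)); ((Posz 2), (Negz 2)); ((Posz 4), (Posz 1))], [:: LF2; LE2], RTT (Negz 3) (Posz 0) (Posz 0) (Posz 0) (Negz 0) (Negz 0), [::]);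
  ([:: ((Negz 0), (Posz 1)); ((Posz 1), (Negz 1)); ((Posz 3), (Posz 1))], [::], RTT (Posz 0) (Posz 1) (Negz 0) (Negz 3) (Posz 0) (Posz 0), [:: LT (Posz 0) (Negz 0) (Negz 0)]);
  ([:: ((Negz 0), (Negz 0)); ((Posz 1), (Posz 2)); ((Posz 3), (Negz 0))], [::], RTT (Posz 0) (Negz 0) (Posz 1) (Negz 3) (Posz 0) (Posz 0), [:: LT (Posz 0) (Negz 0) (Negz 0)]);
  ([:: ((Posz 0), (Negz 0)); ((Posz 2), (Posz 3)); ((Posz 4), (Negz 2)); ((Posz 6), (Posz 1))], [:: LF3; LE3], RTT (Negz 1) (Negz 1) (Posz 0) (Negz 0) (Posz 0) (Negz 0), [::]);
  ([:: ((Posz 1), (Posz 1)); ((Posz 3), (Negz 1)); ((Posz 5), (Posz 1))], [::], RTT (Posz 1) (Posz 0) (Negz 0) (Negz 1) (Negz 1) (Posz 0), [:: LT (Negz 0) (Posz 0) (Negz 0)]);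
  ([:: ((Posz 1), (Negz 0)); ((Posz 3), (Posz 2)); ((Posz 5), (Negz 0))], [::], RTT (Negz 0) (Posz 0) (Posz 1) (Negz 1) (Negz 1) (Posz 0), [:: LT (Negz 0) (Posz 0) (Negz 0)]);
  ([:: ((Negz 0), (Posz 1)); ((Posz 1), (Negz 1)); ((Posz 3), (Posz 1))], [::], RTT (Negz 1) (Negz 1) (Posz 0) (Posz 0) (Posz 0) (Negz 1), [::]);
  ([:: ((Negz 0), (Negz 0)); ((Posz 1), (Posz 2)); ((Posz 3), (Negz 0))], [::], RTT (Negz 3) (Posz 0) (Posz 0) (Posz 0) (Posz 0) (Negz 1), [::]);
  ([:: ((Negz 1), (Posz 1)); ((Posz 0), (Negz 3)); ((Posz 2), (Posz 6)); ((Posz 4), (Negz 3)); ((Posz 6), (Posz 1))], [:: LF1; LE1], RTT (Negz 2) (Posz 0) (Negz 0) (Posz 0) (Negz 0) (Negz 0), [::]);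
  ([:: ((Negz 0), (Posz 1)); ((Posz 1), (Negz 1)); ((Posz 3), (Posz 1))], [::], RTT (Negz 3) (Posz 1) (Negz 0) (Posz 0) (Negz 0) (Negz 0), [::]);
  ([:: ((Negz 0), (Negz 0)); ((Posz 1), (Posz 2)); ((Posz 3), (Negz 0))], [::], RTT (Negz 3) (Negz 0) (Posz 1) (Posz 0) (Negz 0) (Negz 0), [::]);
  ([:: ((Posz 1), (Posz 1)); ((Posz 3), (Negz 1)); ((Posz 5), (Posz 1))], [::], RTT (Negz 0) (Negz 1) (Negz 0) (Negz 0) (Posz 0) (Negz 0), [::]);
  ([:: ((Posz 1), (Negz 0)); ((Posz 3), (Posz 2)); ((Posz 5), (Negz 0))], [::], RTT (Negz 2) (Negz 1) (Posz 1) (Negz 0) (Posz 0) (Negz 0), [::])] : seq certterm).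
case: n Hn => [|n] Hn /=; first refl_close qp g sound 0%N ([:: ([:: ((Posz 2), (Posz 1))], [::], RTT (Negz 1) (Posz 0) (Posz 0) (Negz 1) (Negz 1) (Negz 1), [::]);
  ([:: ((Posz 2), (Negz 0))], [::], RTT (Negz 1) (Posz 0) (Posz 0) (Negz 1) (Posz 0) (Posz 0), [:: LT (Posz 0) (Negz 1) (Posz 0); LT (Posz 0) (Posz 0) (Negz 1)]);
  ([:: ((Posz 2), (Negz 0))], [::], RTT (Negz 3) (Posz 0) (Posz 0) (Posz 0) (Negz 1) (Posz 0), [:: LT (Posz 0) (Posz 0) (Negz 1)]);
  ([:: ((Posz 2), (Negz 0))], [::], RTT (Negz 3) (Negz 1) (Posz 0) (Posz 0) (Posz 0) (Negz 1), [::])] : seq certterm).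
by [].
Qed.

Lemma a0 : a 0%N = 1. Proof. by rewrite /N'11 /psub /= subr0. Qed.
Lemma psubst0 c (f : series A) : psubst c f 0%N = f 0%N.
Proof. by rewrite /psubst expr0 scale1r. Qed.
Lemma qm2q2 : qp (-2) * qp 2 = 1. Proof. by rewrite -qpD addNr qp0. Qed.
Lemma s_aq : s (psubst (qp 2) a) = a. Proof. by rewrite psubst_comp qm2q2 psubst1. Qed.
Lemma pzetaC (f : series A) : pmul pzeta f = pmul f pzeta.
Proof. by apply: pX_central => x; rewrite mul1r mulr1. Qed.
Lemma zwE : zw = pX (qp (-2) *: 1). Proof. by rewrite /zw /pzeta psubst_X. Qed.
Lemma zwC (f : series A) : pmul zw f = pmul f zw.
Proof. by rewrite zwE; apply: pX_central => x; rewrite scal1_comm. Qed.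
Lemma zeta0 : (@pzeta K A) 0%N = 0. Proof. by []. Qed.
Lemma Pz0 : Pz 0%N = 1.
Proof. by rewrite /Pz /psub !pmul0 psubst0 a0 zeta0 mul0r subr0 /N'22 /psub /= subr0 mulr1. Qed.
Lemma Pw0 : (s Pz) 0%N = 1. Proof. by rewrite psubst0 Pz0. Qed.
Lemma N22_0 : N''22 qp g 0%N = 1.
Proof. by rewrite /N''22 /psub pmul0 zeta0 mul0r subr0 /N'22 /psub /= subr0. Qed.
Lemma Dz0 : Dz 0%N = 0.
Proof. by rewrite /Dz /psub pmul0 Pz0 psubst0 mul1r /N'33 /psub /= subr0 subrr. Qed.
Lemma zwG2 : pmul zw G2 = Dz.
Proof.
rewrite /G2 pmulA zwE pmulXC -scalerAl mul1r scalerA qm2q2 scale1r.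
exact: (pshiftK Dz0).
Qed.
Lemma sYc : s Yc = Yc. Proof. exact: psubst_C. Qed.
Lemma sXc : s Xc = Xc. Proof. exact: psubst_C. Qed.
Lemma sX13 : s X13 = X13. Proof. exact: psubst_C. Qed.
Lemma sX23 : s X23 = X23. Proof. exact: psubst_C. Qed.
Lemma sY31 : s Y31 = Y31. Proof. exact: psubst_C. Qed.
Lemma sY32 : s Y32 = Y32. Proof. exact: psubst_C. Qed.
Lemma szeta : s pzeta = zw. Proof. by []. Qed.
Lemma aq0 : psubst (qp 2) a 0%N = 1. Proof. by rewrite psubst0 a0. Qed.
Lemma sa0 : s a 0%N = 1. Proof. by rewrite psubst0 a0. Qed.

Theorem main_thm : charpoly qp g =
  pmul (pmul (psubst (qp 2) a) (N''22 qp g)) (s (N'''33 qp g)).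
Proof.
have S1 : pmul (psubst (qp 2) a) (N''22 qp g) = Pz.
  rewrite /N''22 pmulBr /Pz; congr psub.
  rewrite pmulA -pzetaC -pmulA; congr (pmul pzeta).
  by rewrite pmulA L1 -pmulA [pmul a (pmul (pinv a) Xc)]pmulA pinv_r ?a0 // pmul1l.
have N22E : N''22 qp g = pmul (pinv (psubst (qp 2) a)) Pz.
  by rewrite -S1 pmulA pinv_l ?aq0 // pmul1l.
have sN22 : s (N''22 qp g) = pmul (pinv a) (s Pz).
  by rewrite N22E psubst_mul psubst_inv ?aq0 // s_aq.
have sbeta : s (pinv (N''22 qp g)) = pmul (pinv (s Pz)) a.
  by rewrite psubst_inv ?N22_0 // sN22 pinv_mul ?pinv0 ?Pw0 // pinvK ?a0.
have L2 : pmul a Yc = pmul Yc (s a).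
  by have := congr1 s L1; rewrite !psubst_mul s_aq sYc.
have YcW : pmul Yc (pinv (s a)) = pmul (pinv a) Yc := comm_inv a0 sa0 L2.
have Y31W : pmul Y31 (pinv (s a)) = pmul (pinv a) Y31 := comm_inv a0 sa0 L3.
have PA : pmul Pz (pinv a) = pmul (pinv a) Pz := comm_inv a0 a0 L5.
have sN23 : s (N''23 qp g) = pmul (pinv a) Uz.
  rewrite /N''23 psubst_sub !psubst_mul psubst_inv ?a0 // sX23 sYc sX13.
  rewrite [pmul Yc (pmul _ _)]pmulA YcW -pmulA /Uz pmulBr.
  by rewrite [pmul (pinv a) (pmul a X23)]pmulA pinv_l ?a0 // pmul1l.
have sN32 : s (N''32 qp g) = pmul (pinv a) Vz.
  rewrite /N''32 psubst_sub !psubst_mul psubst_inv ?a0 // sY32 sY31 sXc szeta.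
  rewrite [pmul Y31 (pmul _ _)]pmulA Y31W -pmulA /Vz pmulBr.
  rewrite [pmul (pinv a) (pmul a Y32)]pmulA pinv_l ?a0 // pmul1l.
  by rewrite [pmul (pinv a) (pmul zw _)]pmulA -zwC -pmulA.
have sN33 : s (N''33 qp g) = psub (s d3) (pmul zw (pmul (pinv a) Ez)).
  rewrite /N''33 psubst_sub !psubst_mul psubst_inv ?a0 // sY31 sX13 szeta.
  by rewrite [pmul Y31 (pmul _ _)]pmulA Y31W -pmulA.
have sN333 : s (N'''33 qp g) =
    psub (s d3) (pmul zw (pmul (pinv a) (padd Ez (pmul Vz (pmul (pinv (s Pz)) Uz))))).
  rewrite /N'''33 psubst_sub !psubst_mul sN33 sN32 sbeta sN23 szeta psubB3; congr psub.
  rewrite [pmul (pinv a) (padd Ez _)]pmulDr [pmul zw (padd (pmul (pinv a) Ez) _)]pmulDr.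
  congr padd; congr (pmul zw).
  rewrite -!pmulA; congr (pmul (pinv a)); congr (pmul Vz); congr (pmul (pinv (s Pz))).
  by rewrite pmulA pinv_r ?a0 // pmul1l.
rewrite S1 sN333 pmulBr.
rewrite [pmul Pz (pmul zw _)]pmulA -zwC -pmulA.
rewrite [pmul Pz (pmul (pinv a) _)]pmulA PA -pmulA.
rewrite [pmul Pz (padd Ez _)]pmulDr [pmul Pz (pmul Vz _)]pmulA LI -pmulA.
rewrite [pmul (s Pz) (pmul (pinv (s Pz)) Uz)]pmulA pinv_r ?Pw0 // pmul1l.
rewrite LII [pmul (pinv a) (pmul a G2)]pmulA pinv_l ?a0 // pmul1l zwG2 /Dz.
by rewrite psubKr.
Qed.

End Main.

Unset Implicit Arguments.

Theorem mainTheorem4 (K : fieldType) (qp : K -> K) (A : algType K)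
  (g : UqGens A) :
  qp 0 = 1 ->
  (forall a b : K, qp (a + b) = qp a * qp b) ->
  qp 1 ^+ 2 != 1 ->
  Uq_relations qp g ->
  charpoly qp g =
  pmul (pmul (psubst (qp 2) (N'11 g)) (N''22 qp g))
       (psubst (qp (-2)) (N'''33 qp g)).
Proof.
move=> h0 hD hq hR.
exact: (main_thm h0 hD hq hR).
Qed.
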